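(* Let $s>0$, $Y>0$, $\tau\geq 0$, and consider the delay differential system \[ \dot x(t)=x(t)(1-x(t))-y(t)x(t),\qquad \dot y(t)=-sy(t)+Ye^{-s\tau}y(t-\tau)x(t-\tau), \] with initial data $(\phi,\psi)\in X:=C([-\tau,0],\mathbb{R}_+)^2$. Its equilibria are $E_0=(0,0)$, $E_1=(1,0)$ and $E_+=(x_+(\tau),y_+(\tau))=\left(\frac{s}{Y}e^{s\tau},\,1-\frac{s}{Y}e^{s\tau}\right)$. Let $\tau_c=\frac1s\ln\left(\frac{Y}{s}\right)$ and \[ X^0=\{(\phi,\psi)\in X:\ \phi(0)>0 \text{ and there exists } \theta\in[-\tau,0] \text{ with } \phi(\theta)\psi(\theta)>0\}. \] Then: \begin{enumerate} \item $E_0$ is always unstable. \item (a) $E_1$ is unstable if $0\leq\tau<\tau_c$; (b) $E_1$ is globally asymptotically stable with respect to initial data in $X^0$ if $\tau>\tau_c$ (i.e. if $\frac{se^{s\tau}}{Y}>1$). \item Both components of $E_+$ are positive if and only if $0\leq\tau<\tau_c$ (i.e. $\frac{se^{s\tau}}{Y}<1$). Moreover: (a) when both components of $E_+$ are positive and $\tau=0$, $E_+$ is globally asymptotically stable with respect to initial data in $\operatorname{int}\mathbb{R}^2_+$; (b) when both components of $E_+$ are positive (and $\tau\geq0$), the system is uniformly persistent with respect to initial data in $X^0$: there exists $\epsilon>0$, independent of $(\phi,\psi)\in X^0$, such that $\liminf_{t\to\infty}x(t)>\epsilon$ and $\liminf_{t\to\infty}y(t)>\epsilon$. \end{enumerat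e}
   Context: $\mathbb{R}_+=\{x\in\mathbb{R}:x\geq0\}$; $C([-\tau,0],\mathbb{R}_+)$ carries the uniform norm. Local stability of an equilibrium is in the sense of the linearized delay system, i.e. determined by the roots of its characteristic equation; global asymptotic stability with respect to a set of initial data means local asymptotic stability plus convergence to the equilibrium of every solution with initial data in that set. *)

(* Defs.v *)
From Stdlib Require Import Reals.
From Coquelicot Require Import Coquelicot.
Open Scope R_scope.

Definition tau_c (s Y : R) : R := / s * ln (Y / s).
Definition x_plus (s Y tau : R) : R := s / Y * exp (s * tau).
Definition y_plus (s Y tau : R) : R := 1 - s / Y * exp (s * tau).

(* ---------- Initial data in X = C([-tau,0], R_+)^2 ----------
   Initial functions are represented by functions R -> R; only their
   restriction to [-tau,0] matters. *)
Definition cont_on_interval (f : R -> R) (a b : R) : Prop :=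
  forall t, a <= t <= b ->
    filterlim f (within (fun u => a <= u <= b) (locally t)) (locally (f t)).

Definition in_X (tau : R) (phi psi : R -> R) : Prop :=
  cont_on_interval phi (- tau) 0 /\ cont_on_interval psi (- tau) 0 /\
  (forall t, - tau <= t <= 0 -> 0 <= phi t /\ 0 <= psi t).

Definition in_X0 (tau : R) (phi psi : R -> R) : Prop :=
  in_X tau phi psi /\ 0 < phi 0 /\
  exists theta, - tau <= theta <= 0 /\ 0 < phi theta * psi theta.

Definition is_solution (s Y tau : R) (phi psi x y : R -> R) : Prop :=
  (forall t, - tau <= t <= 0 -> x t = phi t /\ y t = psi t) /\
  (forall t, - tau <= t ->
     filterlim x (within (fun u => - tau <= u) (locally t)) (locally (x t)) /\
     filterlim y (within (fun u => - tau <= u) (locally t)) (locally (y t))) /\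
  (forall t, 0 < t ->
     is_derive x t (x t * (1 - x t) - y t * x t) /\
     is_derive y t (- s * y t + Y * exp (- s * tau) * y (t - tau) * x (t - tau))).

(* ---------- Linearization and characteristic equation ----------
   Right-hand side F(x,y,x_tau,y_tau) =
     ( x(1-x) - y x ,  -s y + Y e^{-s tau} y_tau x_tau ).
   Linearization at an equilibrium (xe,ye):
     u'(t) = A u(t) + B u(t - tau),
   A = dF/d(x,y), B = dF/d(x_tau,y_tau), entries written out below. *)
Definition jacA11 (xe ye : R) : R := 1 - 2 * xe - ye.
Definition jacA12 (xe : R) : R := - xe.
Definition jacA21 : R := 0.
Definition jacA22 (s : R) : R := - s.
Definition jacB11 : R := 0.
Definition jacB12 : R := 0.
Definition jacB21 (s Y tau ye : R) : R := Y * exp (- s * tau) * ye.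
Definition jacB22 (s Y tau xe : R) : R := Y * exp (- s * tau) * xe.

Definition cexp (z : C) : C :=
  (exp (Re z) * cos (Im z), exp (Re z) * sin (Im z)).

(* characteristic function det(lam I - A - B e^{-lam tau}) *)
Definition char_fun (s Y tau xe ye : R) (lam : C) : C :=
  let E := cexp (Cmult (RtoC (- tau)) lam) in
  let m11 := Cminus lam (Cplus (RtoC (jacA11 xe ye)) (Cmult (RtoC jacB11) E)) in
  let m12 := Copp (Cplus (RtoC (jacA12 xe)) (Cmult (RtoC jacB12) E)) in
  let m21 := Copp (Cplus (RtoC jacA21) (Cmult (RtoC (jacB21 s Y tau ye)) E)) in
  let m22 := Cminus lam (Cplus (RtoC (jacA22 s)) (Cmult (RtoC (jacB22 s Y tau xe)) E)) in
  Cminus (Cmult m11 m22) (Cmult m12 m21).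

Definition loc_asym_stable (s Y tau xe ye : R) : Prop :=
  forall lam : C, char_fun s Y tau xe ye lam = RtoC 0 -> Re lam < 0.

Definition unstable (s Y tau xe ye : R) : Prop :=
  exists lam : C, char_fun s Y tau xe ye lam = RtoC 0 /\ 0 < Re lam.

(* liminf_{t->oo} f(t) > e, unfolded:
   there is e' > e such that f(t) >= e' for all large t *)
Definition liminf_gt (f : R -> R) (e : R) : Prop :=
  exists e', e < e' /\ exists T, forall t, T <= t -> e' <= f t.

(* Main.v *)
Require Import Defs.
From Stdlib Require Import Reals Lra Psatz Classical.
From Coquelicot Require Import Coquelicot.
Open Scope R_scope.


Lemma D_eq (f : R -> R) (t l l' : R) : l = l' -> is_derive f t l -> is_derive f t l'.
Proof. intros ->; auto. Qed.

Lemma D_mult (f g : R -> R) (t df dg : R) : is_derive f t df -> is_derive g t dg ->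
  is_derive (fun r => f r * g r) t (df * g t + f t * dg).
Proof. intros Hf Hg. apply (is_derive_mult f g); auto. intros; apply Rmult_comm. Qed.

Lemma D_plus (f g : R -> R) (t df dg : R) : is_derive f t df -> is_derive g t dg ->
  is_derive (fun r => f r + g r) t (df + dg).
Proof. intros Hf Hg. apply (is_derive_plus f g); auto. Qed.

Lemma D_minus (f g : R -> R) (t df dg : R) : is_derive f t df -> is_derive g t dg ->
  is_derive (fun r => f r - g r) t (df - dg).
Proof. intros Hf Hg. apply (is_derive_minus f g); auto. Qed.

Lemma D_const (a t : R) : is_derive (fun _ => a) t 0.
Proof. apply (is_derive_const (K:=R_AbsRing) (V:=R_NormedModule)). Qed.

Lemma D_id (t : R) : is_derive (fun r => r) t 1.
Proof. apply (is_derive_id (K:=R_AbsRing)). Qed.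

Lemma D_exp_lin (k t : R) : is_derive (fun r => exp (k * r)) t (k * exp (k * t)).
Proof.
  assert (H := is_derive_comp exp (fun r => k * r) t (exp (k*t)) k).
  eapply D_eq; [| apply H]. reflexivity. apply is_derive_exp.
  eapply D_eq; [| apply (is_derive_scal (fun r => r) t k 1), D_id]. ring.
Qed.

Lemma D_ln (f : R -> R) (t df : R) : 0 < f t -> is_derive f t df -> is_derive (fun r => ln (f r)) t (df / f t).
Proof.
  intros Hp Hf. assert (H := is_derive_comp ln f t (/ f t) df).
  eapply D_eq; [| apply H; auto]. reflexivity. apply is_derive_ln; auto.
Qed.

Lemma D_shift (f : R -> R) (t a df : R) : is_derive f (t - a) df -> is_derive (fun r => f (r - a)) t df.
Proof.
  intros Hf. assert (H := is_derive_comp f (fun r => r - a) t df 1).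
  eapply D_eq; [| apply H; auto]. simpl; unfold scal; simpl; unfold mult; simpl; ring.
  eapply D_eq; [| apply D_minus; [apply D_id | apply D_const]]. ring.
Qed.

Lemma D_scal (f : R -> R) (t k df : R) : is_derive f t df -> is_derive (fun r => k * f r) t (k * df).
Proof. apply is_derive_scal. Qed.

Lemma D_ext (f g : R -> R) (t l : R) : (forall r, f r = g r) -> is_derive f t l -> is_derive g t l.
Proof. apply is_derive_ext. Qed.


Lemma der_cont (f : R -> R) (t d : R) : is_derive f t d -> continuity_pt f t.
Proof.
  intros H. apply continuity_pt_filterlim.
  apply (ex_derive_continuous (K:=R_AbsRing) (V:=R_NormedModule)). exists d; auto.
Qed.

Lemma ball_R (x e y : R) : ball x e y <-> Rabs (y - x) < e.
Proof. reflexivity. Qed.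


Lemma exp_le a b : a <= b -> exp a <= exp b.
Proof. intros H. destruct (Req_dec a b) as [->|]; [lra|]. apply Rlt_le, exp_increasing; lra. Qed.

Lemma Rabs_le_inv a b : Rabs a <= b -> - b <= a <= b.
Proof. unfold Rabs; destruct Rcase_abs; intros; lra. Qed.

Lemma D_opp (f : R -> R) t d : is_derive f t d -> is_derive (fun r => - f r) t (- d).
Proof.
  intros H. eapply D_ext; [|eapply D_eq; [|apply (D_minus (fun _ => 0) f t 0 d); [apply D_const|auto]]].
  intros; simpl; ring. ring.
Qed.

Lemma deriv_ge' (f df : R -> R) a b r : a <= b ->
  (forall t, a < t < b -> is_derive f t (df t)) ->
  (forall t, a <= t <= b -> continuity_pt f t) ->
  (forall t, a <= t <= b -> r <= df t) -> r * (b - a) <= f b - f a.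
Proof.
  intros Hab Hd Hc Hr.
  destruct (MVT_gen f a b df) as [c [Hc1 Hc2]].
  - intros t Ht. rewrite Rmin_left in Ht by lra. rewrite Rmax_right in Ht by lra. auto.
  - intros t Ht. rewrite Rmin_left in Ht by lra. rewrite Rmax_right in Ht by lra. auto.
  - rewrite Rmin_left in Hc1 by lra. rewrite Rmax_right in Hc1 by lra.
    rewrite Hc2. apply Rmult_le_compat_r; [lra|]. auto.
Qed.

Lemma deriv_ge (f df : R -> R) a b r : a <= b ->
  (forall t, a <= t <= b -> is_derive f t (df t)) ->
  (forall t, a <= t <= b -> r <= df t) -> r * (b - a) <= f b - f a.
Proof.
  intros Hab Hd Hr. apply (deriv_ge' f df); auto.
  - intros t Ht; apply Hd; lra.
  - intros t Ht; apply (der_cont f t (df t)); auto.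
Qed.

Lemma deriv_le (f df : R -> R) a b r : a <= b ->
  (forall t, a <= t <= b -> is_derive f t (df t)) ->
  (forall t, a <= t <= b -> df t <= r) -> f b - f a <= r * (b - a).
Proof.
  intros Hab Hd Hr.
  assert (H := deriv_ge (fun t => - f t) (fun t => - df t) a b (-r) Hab).
  assert (- r * (b - a) <= - f b - - f a); [|lra].
  apply H.
  - intros t Ht. apply D_opp; auto.
  - intros t Ht. specialize (Hr t Ht). lra.
Qed.

Lemma cont_eps (f : R -> R) x : continuity_pt f x ->
  forall e, 0 < e -> exists d, 0 < d /\ forall t, Rabs (t - x) < d -> Rabs (f t - f x) < e.
Proof.
  intros Hc e He. apply continuity_pt_filterlim in Hc.
  apply filterlim_locally with (eps := mkposreal e He) in Hc.
  destruct Hc as [d Hd]. exists d. split. apply cond_pos.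
  intros t Ht. apply (Hd t). apply Ht.
Qed.

Lemma last_cross (u : R -> R) a b L : a <= b ->
  (forall t, a <= t <= b -> continuity_pt u t) -> L <= u a -> u b < L ->
  exists S, a <= S < b /\ u S = L /\ forall r, S <= r <= b -> u r <= L.
Proof.
  intros Hab Hc Ha Hb.
  set (E := fun t => a <= t <= b /\ L <= u t).
  destruct (completeness E) as [S [HS1 HS2]].
  - exists b. intros t [Ht _]. lra.
  - exists a. split; [lra|auto].
  assert (HaS : a <= S) by (apply HS1; split; [lra|auto]).
  assert (HSb : S <= b) by (apply HS2; intros t [Ht _]; lra).
  assert (Hgt : forall r, S < r <= b -> u r < L).
  { intros r Hr. destruct (Rlt_le_dec (u r) L); auto.
    exfalso. assert (r <= S) by (apply HS1; split; [lra|auto]). lra. }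
  assert (HuS1 : L <= u S).
  { destruct (Rle_lt_dec L (u S)) as [|Hlt]; auto. exfalso.
    destruct (cont_eps u S (Hc S ltac:(lra)) (L - u S) ltac:(lra)) as [d [Hd Hd2]].
    assert (S <= S - d/2); [|lra].
    apply HS2. intros t [Ht1 Ht2].
    assert (t <= S) by (apply HS1; split; auto).
    destruct (Rle_lt_dec t (S - d/2)); auto. exfalso.
    assert (Rabs (t - S) < d) by (apply Rabs_def1; lra).
    specialize (Hd2 t H0). apply Rabs_def2 in Hd2. lra. }
  assert (HSb' : S < b).
  { destruct (Req_dec S b); [subst; lra | lra]. }
  assert (HuS2 : u S <= L).
  { destruct (Rle_lt_dec (u S) L) as [|Hlt]; auto. exfalso.
    destruct (cont_eps u S (Hc S ltac:(lra)) (u S - L) ltac:(lra)) as [d [Hd Hd2]].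
    set (r := Rmin (S + d/2) b).
    assert (S < r <= b) by (unfold r; apply Rmin_case_strong; lra).
    assert (Rabs (r - S) < d) by (apply Rabs_def1; unfold r in *; apply Rmin_case_strong; intros; lra).
    specialize (Hd2 r H0). apply Rabs_def2 in Hd2. specialize (Hgt r H). lra. }
  exists S. split; [lra|]. split; [lra|].
  intros r Hr. destruct (Req_dec r S); [subst; lra|]. apply Rlt_le, Hgt; lra.
Qed.

Lemma cont_opp_comp (u : R -> R) t : continuity_pt u (- t) -> continuity_pt (fun r => - u (- r)) t.
Proof.
  intros H. apply (continuity_pt_opp (fun r => u (- r))).
  apply (continuity_pt_comp (fun r => - r) u). apply continuity_pt_opp, continuity_pt_id. auto.
Qed.

Lemma first_cross (u : R -> R) a b L : a <= b ->
  (forall t, a <= t <= b -> continuity_pt u t) -> L < u a -> u b <= L ->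
  exists S, a < S <= b /\ u S = L /\ forall r, a <= r <= S -> L <= u r.
Proof.
  intros Hab Hc Ha Hb.
  destruct (last_cross (fun r => - u (- r)) (-b) (-a) (-L)) as [S [HS1 [HS2 HS3]]].
  - lra.
  - intros t Ht. apply cont_opp_comp. apply Hc. lra.
  - rewrite Ropp_involutive. lra.
  - rewrite Ropp_involutive. lra.
  - exists (- S). split; [lra|]. split; [lra|].
    intros r Hr. specialize (HS3 (- r) ltac:(lra)). rewrite Ropp_involutive in HS3. lra.
Qed.

Lemma trap (f df : R -> R) T L r : 0 < r ->
  (forall t, T < t -> is_derive f t (df t)) ->
  (forall t, T < t -> f t <= L -> r <= df t) ->
  exists T', T < T' /\ forall t, T' <= t -> L <= f t.
Proof.
  intros Hr Hd Hdf.
  assert (Hex : exists t0, T < t0 /\ L <= f t0).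
  { apply NNPP. intros Hn.
    assert (Hlt : forall t, T < t -> f t < L).
    { intros t Ht. destruct (Rlt_le_dec (f t) L); auto. exfalso; apply Hn; eauto. }
    set (t1 := T + 1).
    set (t2 := t1 + Rabs (L - f t1) / r + 1).
    assert (Hp : 0 <= Rabs (L - f t1) / r) by (apply Rdiv_le_0_compat; [apply Rabs_pos|lra]).
    assert (H := deriv_ge f df t1 t2 r ltac:(unfold t2; lra)).
    assert (r * (t2 - t1) <= f t2 - f t1).
    { apply H. intros t Ht; apply Hd; unfold t1 in *; lra.
      intros t Ht. apply Hdf. unfold t1 in *; lra. apply Rlt_le, Hlt. unfold t1 in *; lra. }
    assert (f t2 < L) by (apply Hlt; unfold t2; assert (t1 = T + 1) by reflexivity; lra).
    assert (r * (t2 - t1) = Rabs (L - f t1) + r) by (unfold t2; field; lra).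
    assert (L - f t1 <= Rabs (L - f t1)) by apply RRle_abs. lra. }
  destruct Hex as [t0 [Ht0 Hft0]].
  exists t0. split; auto. intros t Ht.
  destruct (Rle_lt_dec L (f t)) as [|Hlt]; auto. exfalso.
  destruct (last_cross f t0 t L Ht) as [S [HS1 [HS2 HS3]]]; auto.
  { intros r0 Hr0. apply (der_cont f r0 (df r0)). apply Hd. lra. }
  assert (H := deriv_ge f df S t r ltac:(lra)).
  assert (r * (t - S) <= f t - f S).
  { apply H. intros r0 Hr0; apply Hd; lra. intros r0 Hr0; apply Hdf; [lra|]. apply HS3; lra. }
  assert (0 <= r * (t - S)) by (apply Rmult_le_pos; lra). lra.
Qed.

Lemma persist_gen (u G dG : R -> R) T L r Gmax : 0 < r ->
  (forall t, T < t -> is_derive G t (dG t)) ->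
  (forall t, T < t -> continuity_pt u t) ->
  (forall t, T < t -> u t <= L -> r <= dG t) ->
  (forall t, T < t -> G t <= Gmax) ->
  exists t0, T < t0 /\ L <= u t0 /\
    forall t, t0 <= t -> u t < L -> exists S, t0 <= S <= t /\ u S = L /\ G S <= G t.
Proof.
  intros Hr Hd Hc HdG HG.
  assert (Hex : exists t0, T < t0 /\ L <= u t0).
  { apply NNPP. intros Hn.
    assert (Hlt : forall t, T < t -> u t < L).
    { intros t Ht. destruct (Rlt_le_dec (u t) L); auto. exfalso; apply Hn; eauto. }
    set (t1 := T + 1).
    set (t2 := t1 + Rabs (Gmax - G t1) / r + 1).
    assert (Hp : 0 <= Rabs (Gmax - G t1) / r) by (apply Rdiv_le_0_compat; [apply Rabs_pos|lra]).
    assert (H := deriv_ge G dG t1 t2 r ltac:(unfold t2; lra)).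
    assert (r * (t2 - t1) <= G t2 - G t1).
    { apply H. intros t Ht; apply Hd; unfold t1 in *; lra.
      intros t Ht. apply HdG. unfold t1 in *; lra. apply Rlt_le, Hlt. unfold t1 in *; lra. }
    assert (G t2 <= Gmax) by (apply HG; unfold t2; assert (t1 = T + 1) by reflexivity; lra).
    assert (r * (t2 - t1) = Rabs (Gmax - G t1) + r) by (unfold t2; field; lra).
    assert (Gmax - G t1 <= Rabs (Gmax - G t1)) by apply RRle_abs. lra. }
  destruct Hex as [t0 [Ht0 Hut0]].
  exists t0. split; auto. split; auto. intros t Ht Hlt.
  destruct (last_cross u t0 t L Ht) as [S [HS1 [HS2 HS3]]]; auto.
  { intros r0 Hr0. apply Hc. lra. }
  exists S. split; [lra|]. split; auto.
  assert (H := deriv_ge G dG S t 0 ltac:(lra)).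
  assert (0 * (t - S) <= G t - G S).
  { apply H. intros r0 Hr0; apply Hd; lra. intros r0 Hr0.
    assert (r <= dG r0) by (apply HdG; [lra|]; apply HS3; lra). lra. }
  lra.
Qed.

Lemma pos_gen (u du : R -> R) a b M : a <= b -> 0 < u a ->
  (forall t, a <= t <= b -> is_derive u t (du t)) ->
  (forall t, a <= t <= b -> 0 <= u t -> - M * u t <= du t) ->
  forall t, a <= t <= b -> 0 < u t.
Proof.
  intros Hab Ha Hd Hdu t Ht.
  destruct (Rlt_le_dec 0 (u t)) as [|Hle]; auto. exfalso.
  destruct (first_cross u a t 0) as [S [HS1 [HS2 HS3]]]; try lra; auto.
  { intros r Hr. apply (der_cont u r (du r)). apply Hd. lra. }
  assert (H := deriv_ge (fun r => u r * exp (M * r)) (fun r => du r * exp (M * r) + u r * (M * exp (M * r))) a S 0 ltac:(lra)).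
  assert (0 * (S - a) <= u S * exp (M * S) - u a * exp (M * a)).
  { apply H.
    - intros r Hr. apply (D_mult u (fun r => exp (M * r))). apply Hd; lra. apply D_exp_lin.
    - intros r Hr. assert (Hu := HS3 r Hr). assert (Hdd := Hdu r ltac:(lra) Hu).
      assert (0 < exp (M * r)) by apply exp_pos.
      assert (0 <= (du r + M * u r) * exp (M * r)) by (apply Rmult_le_pos; lra).
      nra. }
  rewrite HS2 in H0. assert (0 < u a * exp (M * a)) by (apply Rmult_lt_0_compat; [lra|apply exp_pos]).
  lra.
Qed.

Definition Cauchy_inf (F : R -> R) := forall e, 0 < e -> exists T, forall t t', T <= t -> T <= t' -> Rabs (F t - F t') < e.

Lemma mono_cauchy (F : R -> R) T m :
  (forall a b, T <= a <= b -> F b <= F a) -> (forall t, T <= t -> m <= F t) -> Cauchy_inf F.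
Proof.
  intros Hmon Hb e He.
  set (E := fun v => exists t, T <= t /\ v = - F t).
  destruct (completeness E) as [l [Hl1 Hl2]].
  - exists (- m). intros v [t [Ht ->]]. specialize (Hb t Ht). lra.
  - exists (- F T). exists T. split; [lra|auto].
  assert (Hex : exists t1, T <= t1 /\ l - e < - F t1).
  { apply NNPP. intros Hn.
    assert (l <= l - e); [|lra]. apply Hl2. intros v [t [Ht ->]].
    destruct (Rlt_le_dec (l - e) (- F t)); [exfalso; apply Hn; eauto|lra]. }
  destruct Hex as [t1 [Ht1 Hlt]]. exists t1. intros t t' Ht Ht'.
  assert (- F t <= l) by (apply Hl1; exists t; split; [lra|auto]).
  assert (- F t' <= l) by (apply Hl1; exists t'; split; [lra|auto]).
  assert (F t <= F t1) by (apply Hmon; lra).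
  assert (F t' <= F t1) by (apply Hmon; lra).
  apply Rabs_def1; lra.
Qed.

Lemma lip_of_deriv (u du : R -> R) T K :
  (forall t, T <= t -> is_derive u t (du t)) -> (forall t, T <= t -> Rabs (du t) <= K) ->
  forall a b, T <= a -> a <= b -> Rabs (u b - u a) <= K * (b - a).
Proof.
  intros Hd HK a b Ha Hab.
  assert (H1 := deriv_ge u du a b (-K) Hab).
  assert (H2 := deriv_le u du a b K Hab).
  assert (- K * (b - a) <= u b - u a).
  { apply H1. intros t Ht; apply Hd; lra. intros t Ht. specialize (HK t ltac:(lra)).
    apply Rabs_le_inv in HK. lra. }
  assert (u b - u a <= K * (b - a)).
  { apply H2. intros t Ht; apply Hd; lra. intros t Ht. specialize (HK t ltac:(lra)).
    apply Rabs_le_inv in HK. lra. }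
  apply Rabs_le; lra.
Qed.

Lemma barbalat (F dF u : R -> R) T0 K : 0 < K -> Cauchy_inf F ->
  (forall t, T0 <= t -> is_derive F t (dF t)) ->
  (forall a b, T0 <= a -> a <= b -> Rabs (u b - u a) <= K * (b - a)) ->
  (forall e, 0 < e -> exists d T, 0 < d /\ forall t, T <= t -> e <= u t -> dF t <= - d) ->
  forall e, 0 < e -> exists T, forall t, T <= t -> u t < e.
Proof.
  intros HK HC Hd Hl Hcond e He.
  destruct (Hcond (e/2) ltac:(lra)) as [d [T1 [Hd0 HT1]]].
  set (h := e / (2 * K)).
  assert (Hh : 0 < h) by (unfold h; apply Rdiv_lt_0_compat; lra).
  destruct (HC (d * h) ltac:(apply Rmult_lt_0_compat; lra)) as [T2 HT2].
  exists (Rmax T0 (Rmax T1 T2)). intros t Ht.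
  assert (T0 <= t /\ T1 <= t /\ T2 <= t) as [Ha [Hb Hc]].
  { revert Ht. unfold Rmax. repeat destruct Rle_dec; intros; lra. }
  destruct (Rlt_le_dec (u t) e) as [|Hge]; auto. exfalso.
  assert (Hdec : F (t + h) - F t <= - d * h).
  { assert (H := deriv_le F dF t (t + h) (- d) ltac:(lra)).
    replace (- d * h) with (- d * (t + h - t)) by ring. apply H.
    intros r Hr; apply Hd; lra.
    intros r Hr. apply HT1; [lra|].
    assert (Hr2 := Hl t r Ha ltac:(lra)). apply Rabs_le_inv in Hr2.
    assert (K * (r - t) <= K * h) by (apply Rmult_le_compat_l; lra).
    assert (K * h = e / 2) by (unfold h; field; lra). lra. }
  specialize (HT2 (t + h) t ltac:(lra) ltac:(lra)). apply Rabs_def2 in HT2. lra.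
Qed.

Lemma to_is_lim (f : R -> R) l :
  (forall e, 0 < e -> exists T, forall t, T <= t -> Rabs (f t - l) < e) -> is_lim f p_infty l.
Proof.
  intros H. apply is_lim_spec. intros eps. destruct (H eps (cond_pos eps)) as [T HT].
  exists T. intros t Ht. apply HT; lra.
Qed.

Lemma exp_decay (P dP : R -> R) T k :
  (forall t, T <= t -> is_derive P t (dP t)) -> (forall t, T <= t -> dP t <= - k * P t) ->
  forall t, T <= t -> P t <= P T * exp (- k * (t - T)).
Proof.
  intros Hd Hk t Ht.
  assert (H := deriv_le (fun r => P r * exp (k * r)) (fun r => dP r * exp (k * r) + P r * (k * exp (k * r))) T t 0 Ht).
  assert (P t * exp (k * t) - P T * exp (k * T) <= 0 * (t - T)).
  { apply H. intros r Hr. apply (D_mult P (fun r => exp (k * r))). apply Hd; lra. apply D_exp_lin.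
    intros r Hr. specialize (Hk r ltac:(lra)). assert (0 < exp (k * r)) by apply exp_pos.
    assert ((dP r + k * P r) * exp (k * r) <= 0) by (apply Rmult_le_0_r; lra). nra. }
  assert (exp (- k * (t - T)) * exp (k * t) = exp (k * T)).
  { rewrite <- exp_plus. f_equal. ring. }
  assert (0 < exp (k * t)) by apply exp_pos.
  assert (P t * exp (k * t) <= P T * exp (- k * (t - T)) * exp (k * t)) by (rewrite Rmult_assoc, H1; lra).
  apply Rmult_le_reg_r with (exp (k * t)); auto.
Qed.


Definition cc (s Y tau : R) := Y * exp (- s * tau).

Record Setup (s Y tau : R) (phi psi x y : R -> R) : Prop := {
  su_s : 0 < s; su_Y : 0 < Y; su_tau : 0 <= tau;
  su_X : in_X tau phi psi; su_sol : is_solution s Y tau phi psi x y;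
  su_phi0 : 0 < phi 0 }.

Lemma within_to_pt (f : R -> R) a t :
  filterlim f (within (fun u => a <= u) (locally t)) (locally (f t)) -> a < t -> continuity_pt f t.
Proof.
  intros H Hat. apply continuity_pt_filterlim. apply filterlim_locally. intros eps.
  apply filterlim_locally with (eps := eps) in H. destruct H as [d Hd].
  assert (Hp : 0 < Rmin d (t - a)) by (apply Rmin_glb_lt; [apply cond_pos|lra]).
  exists (mkposreal _ Hp). intros u Hu. apply Hd.
  - change (Rabs (u - t) < d). change (Rabs (u - t) < Rmin d (t - a)) in Hu.
    assert (Rmin d (t - a) <= d) by apply Rmin_l. lra.
  - change (Rabs (u - t) < Rmin d (t - a)) in Hu.
    assert (Rmin d (t - a) <= t - a) by apply Rmin_r. apply Rabs_def2 in Hu. lra.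
Qed.

Lemma within_eps (f : R -> R) a t :
  filterlim f (within (fun u => a <= u) (locally t)) (locally (f t)) ->
  forall e, 0 < e -> exists d, 0 < d /\ forall u, a <= u -> Rabs (u - t) < d -> Rabs (f u - f t) < e.
Proof.
  intros H e He. apply filterlim_locally with (eps := mkposreal e He) in H.
  destruct H as [d Hd]. exists d. split; [apply cond_pos|]. intros u Hu1 Hu2.
  apply (Hd u); auto.
Qed.


Lemma S_dx s Y tau phi psi x y : Setup s Y tau phi psi x y ->
  forall t, 0 < t -> is_derive x t (x t * (1 - x t) - y t * x t).
Proof. intros [_ _ _ _ [_ [_ H]] _] t Ht. apply H; auto. Qed.

Lemma S_dy s Y tau phi psi x y : Setup s Y tau phi psi x y ->
  forall t, 0 < t -> is_derive y t (- s * y t + cc s Y tau * y (t - tau) * x (t - tau)).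
Proof. intros [_ _ _ _ [_ [_ H]] _] t Ht. apply H; auto. Qed.

Lemma S_hist s Y tau phi psi x y : Setup s Y tau phi psi x y ->
  forall t, - tau <= t <= 0 -> 0 <= x t /\ 0 <= y t.
Proof.
  intros [_ _ _ [_ [_ HX]] [Hh _] _] t Ht. destruct (Hh t Ht) as [-> ->]. apply HX; auto.
Qed.

Lemma S_x0 s Y tau phi psi x y : Setup s Y tau phi psi x y -> x 0 = phi 0 /\ y 0 = psi 0.
Proof.
  intros [_ _ Ht _ [Hh _] _]. apply Hh. lra.
Qed.

Lemma S_cx s Y tau phi psi x y : Setup s Y tau phi psi x y ->
  forall t, - tau < t -> continuity_pt x t.
Proof.
  intros [_ _ _ _ [_ [Hc _]] _] t Ht. apply (within_to_pt x (- tau)); [apply Hc|]; lra.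
Qed.

Lemma S_cy s Y tau phi psi x y : Setup s Y tau phi psi x y ->
  forall t, - tau < t -> continuity_pt y t.
Proof.
  intros [_ _ _ _ [_ [Hc _]] _] t Ht. apply (within_to_pt y (- tau)); [apply Hc|]; lra.
Qed.

Lemma S_ex s Y tau phi psi x y : Setup s Y tau phi psi x y ->
  forall t, - tau <= t -> forall e, 0 < e -> exists d, 0 < d /\
    forall u, - tau <= u -> Rabs (u - t) < d -> Rabs (x u - x t) < e.
Proof.
  intros [_ _ _ _ [_ [Hc _]] _] t Ht. apply within_eps. apply Hc; auto.
Qed.

Lemma S_ey s Y tau phi psi x y : Setup s Y tau phi psi x y ->
  forall t, - tau <= t -> forall e, 0 < e -> exists d, 0 < d /\
    forall u, - tau <= u -> Rabs (u - t) < d -> Rabs (y u - y t) < e.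
Proof.
  intros [_ _ _ _ [_ [Hc _]] _] t Ht. apply within_eps. apply Hc; auto.
Qed.

Lemma S_xpos s Y tau phi psi x y : Setup s Y tau phi psi x y ->
  forall t, 0 <= t -> 0 < x t.
Proof.
  intros HS. assert (Hx0 : 0 < x 0) by (destruct (S_x0 _ _ _ _ _ _ _ HS) as [-> _]; apply HS).
  assert (Htau := su_tau _ _ _ _ _ _ _ HS).
  destruct (S_ex _ _ _ _ _ _ _ HS 0 ltac:(lra) (x 0 / 2) ltac:(lra)) as [d [Hd Hd2]].
  intros t Ht.
  destruct (Rlt_le_dec t d) as [Htd|Htd].
  { assert (H := Hd2 t ltac:(lra) ltac:(apply Rabs_def1; lra)). apply Rabs_def2 in H. lra. }
  set (g := fun r => 1 - x r - y r).
  assert (Hg : forall r, d/2 <= r <= t -> continuity_pt g r).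
  { intros r Hr. unfold g. apply continuity_pt_minus. apply continuity_pt_minus.
    apply continuity_pt_const. intros ? ?; reflexivity.
    apply (S_cx _ _ _ _ _ _ _ HS); lra. apply (S_cy _ _ _ _ _ _ _ HS); lra. }
  destruct (continuity_ab_min g (d/2) t ltac:(lra) Hg) as [mx [Hmx _]].
  apply (pos_gen x (fun r => x r * (1 - x r) - y r * x r) (d/2) t (Rabs (g mx))); try lra.
  - assert (H := Hd2 (d/2) ltac:(lra) ltac:(apply Rabs_def1; lra)). apply Rabs_def2 in H. lra.
  - intros r Hr. apply (S_dx _ _ _ _ _ _ _ HS). lra.
  - intros r Hr Hxr. specialize (Hmx r Hr). unfold g in Hmx.
    assert (Hm : - Rabs (g mx) <= g mx) by (assert (H := Rabs_pos (g mx)); assert (H2 := RRle_abs (- g mx)); rewrite Rabs_Ropp in H2; lra).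
    assert (Hm2 : 0 <= x r * ((1 - x r - y r) + Rabs (g mx))) by (apply Rmult_le_pos; unfold g in *; lra).
    nra.
Qed.

Lemma S_xnn s Y tau phi psi x y : Setup s Y tau phi psi x y ->
  forall t, - tau <= t -> 0 <= x t.
Proof.
  intros HS t Ht. destruct (Rle_lt_dec 0 t).
  - apply Rlt_le, (S_xpos _ _ _ _ _ _ _ HS); auto.
  - apply (S_hist _ _ _ _ _ _ _ HS). lra.
Qed.

Lemma S_dz s Y tau phi psi x y : Setup s Y tau phi psi x y ->
  forall t, 0 < t -> is_derive (fun r => y r * exp (s * r)) t
     (exp (s * t) * (cc s Y tau * y (t - tau) * x (t - tau))).
Proof.
  intros HS t Ht. eapply D_eq; [|apply (D_mult y (fun r => exp (s * r)))].
  2: apply (S_dy _ _ _ _ _ _ _ HS); auto. 2: apply D_exp_lin. ring.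
Qed.

Lemma cont_z (y : R -> R) s t : continuity_pt y t -> continuity_pt (fun r => y r * exp (s * r)) t.
Proof.
  intros H. apply (continuity_pt_mult y (fun r => exp (s * r))); auto.
  apply (der_cont _ _ (s * exp (s * t))). apply D_exp_lin.
Qed.

Lemma S_ynn s Y tau phi psi x y : Setup s Y tau phi psi x y -> (0 < tau \/ 0 < psi 0) ->
  forall t, - tau <= t -> 0 <= y t.
Proof.
  intros HS Hcase.
  assert (Hs := su_s _ _ _ _ _ _ _ HS). assert (HY := su_Y _ _ _ _ _ _ _ HS).
  assert (Htau := su_tau _ _ _ _ _ _ _ HS).
  assert (Hc : 0 < cc s Y tau) by (unfold cc; apply Rmult_lt_0_compat; [lra|apply exp_pos]).
  destruct (Rlt_le_dec 0 tau) as [Htp|Ht0].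
  - assert (Hind : forall n : nat, forall t, - tau <= t <= INR n * tau -> 0 <= y t).
    { induction n as [|n IH].
      - intros t Ht. simpl in Ht. apply (S_hist _ _ _ _ _ _ _ HS). lra.
      - intros t Ht. rewrite S_INR in Ht.
        assert (Hn : 0 <= INR n) by apply pos_INR.
        assert (Hn2 : 0 <= INR n * tau) by (apply Rmult_le_pos; lra).
        destruct (Rle_lt_dec t (INR n * tau)) as [Hle|Hlt]. apply IH; lra.
        assert (H := deriv_ge' (fun r => y r * exp (s * r))
             (fun r => exp (s * r) * (cc s Y tau * y (r - tau) * x (r - tau))) (INR n * tau) t 0 ltac:(lra)).
        assert (Hz : 0 * (t - INR n * tau) <= y t * exp (s * t) - y (INR n * tau) * exp (s * (INR n * tau))).
        { apply H.
          - intros r Hr. apply (S_dz _ _ _ _ _ _ _ HS). lra.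
          - intros r Hr. apply cont_z. apply (S_cy _ _ _ _ _ _ _ HS). lra.
          - intros r Hr. apply Rmult_le_pos. apply Rlt_le, exp_pos.
            apply Rmult_le_pos. apply Rmult_le_pos. lra. apply IH; lra.
            apply (S_xnn _ _ _ _ _ _ _ HS). lra. }
        assert (0 <= y (INR n * tau)) by (apply IH; lra).
        assert (0 <= y (INR n * tau) * exp (s * (INR n * tau))) by (apply Rmult_le_pos; [lra|apply Rlt_le, exp_pos]).
        assert (Hpos : 0 <= y t * exp (s * t)) by lra.
        assert (0 < exp (s * t)) by apply exp_pos.
        destruct (Rle_lt_dec 0 (y t)); auto. nra. }
    intros t Ht. destruct (nfloor_ex ((t + tau) / tau)) as [n Hn].
    { apply Rdiv_le_0_compat; lra. }
    apply (Hind (S n)). rewrite S_INR. split; [lra|].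
    destruct Hn as [_ Hn]. apply Rmult_lt_compat_r with (r := tau) in Hn; auto.
    unfold Rdiv in Hn. rewrite Rmult_assoc, Rinv_l in Hn by lra. lra.
  - assert (Ht0' : tau = 0) by lra.
    destruct Hcase as [|Hpsi]; [lra|].
    assert (Hy0 : 0 < y 0) by (destruct (S_x0 _ _ _ _ _ _ _ HS) as [_ ->]; auto).
    destruct (S_ey _ _ _ _ _ _ _ HS 0 ltac:(lra) (y 0 / 2) ltac:(lra)) as [d [Hd Hd2]].
    intros t Ht.
    destruct (Rlt_le_dec t d) as [Htd|Htd].
    { assert (H := Hd2 t ltac:(lra) ltac:(apply Rabs_def1; lra)). apply Rabs_def2 in H. lra. }
    apply Rlt_le.
    apply (pos_gen y (fun r => - s * y r + cc s Y tau * y (r - tau) * x (r - tau)) (d/2) t s); try lra.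
    + assert (H := Hd2 (d/2) ltac:(lra) ltac:(apply Rabs_def1; lra)). apply Rabs_def2 in H. lra.
    + intros r Hr. apply (S_dy _ _ _ _ _ _ _ HS). lra.
    + intros r Hr Hyr. rewrite Ht0', Rminus_0_r.
      assert (0 <= x r) by (apply (S_xnn _ _ _ _ _ _ _ HS); lra).
      assert (0 <= cc s Y 0 * y r * x r) by (apply Rmult_le_pos; [apply Rmult_le_pos|]; [rewrite <- Ht0'|..]; lra).
      lra.
Qed.

Lemma S_zmono s Y tau phi psi x y : Setup s Y tau phi psi x y -> (0 < tau \/ 0 < psi 0) ->
  forall a b, 0 < a <= b -> y a * exp (s * a) <= y b * exp (s * b).
Proof.
  intros HS Hcase a b Hab.
  assert (Hs := su_s _ _ _ _ _ _ _ HS). assert (HY := su_Y _ _ _ _ _ _ _ HS).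
  assert (Hc : 0 < cc s Y tau) by (unfold cc; apply Rmult_lt_0_compat; [lra|apply exp_pos]).
  assert (H := deriv_ge (fun r => y r * exp (s * r))
             (fun r => exp (s * r) * (cc s Y tau * y (r - tau) * x (r - tau))) a b 0 ltac:(lra)).
  assert (0 * (b - a) <= y b * exp (s * b) - y a * exp (s * a)); [|lra].
  apply H.
  - intros r Hr. apply (S_dz _ _ _ _ _ _ _ HS). lra.
  - intros r Hr. apply Rmult_le_pos. apply Rlt_le, exp_pos.
    assert (Htau := su_tau _ _ _ _ _ _ _ HS).
    apply Rmult_le_pos. apply Rmult_le_pos. lra. apply (S_ynn _ _ _ _ _ _ _ HS); auto; lra.
    apply (S_xnn _ _ _ _ _ _ _ HS). lra.
Qed.

Lemma S_xle s Y tau phi psi x y : Setup s Y tau phi psi x y -> (0 < tau \/ 0 < psi 0) ->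
  forall d, 0 < d -> exists T, 0 < T /\ forall t, T <= t -> x t <= 1 + d.
Proof.
  intros HS Hcase d Hd.
  destruct (trap (fun r => - x r) (fun r => - (x r * (1 - x r) - y r * x r)) 0 (- (1 + d)) d Hd) as [T [HT1 HT2]].
  - intros t Ht. apply D_opp. apply (S_dx _ _ _ _ _ _ _ HS); auto.
  - intros t Ht Hle. assert (0 <= y t) by (apply (S_ynn _ _ _ _ _ _ _ HS); auto; assert (H := su_tau _ _ _ _ _ _ _ HS); lra).
    assert (1 + d <= x t) by lra. nra.
  - exists T. split; auto. intros t Ht. specialize (HT2 t Ht). lra.
Qed.

Definition Bconst s Y tau := (2 * s * cc s Y tau + cc s Y tau / 4) / s + 1.

Lemma S_ybound s Y tau phi psi x y : Setup s Y tau phi psi x y -> (0 < tau \/ 0 < psi 0) ->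
  exists T, 0 < T /\ forall t, T <= t -> y t <= Bconst s Y tau.
Proof.
  intros HS Hcase.
  assert (Hs := su_s _ _ _ _ _ _ _ HS). assert (HY := su_Y _ _ _ _ _ _ _ HS).
  assert (Htau := su_tau _ _ _ _ _ _ _ HS).
  assert (Hc : 0 < cc s Y tau) by (unfold cc; apply Rmult_lt_0_compat; [lra|apply exp_pos]).
  set (c := cc s Y tau) in *.
  destruct (S_xle _ _ _ _ _ _ _ HS Hcase 1 ltac:(lra)) as [T2 [HT2 HT2']].
  set (B := Bconst s Y tau).
  assert (HB : s * B = 2 * s * c + c / 4 + s) by (unfold B, Bconst; fold c; field; lra).
  destruct (trap (fun r => - (c * x (r - tau) + y r))
     (fun r => - (c * (x (r - tau) * (1 - x (r - tau)) - y (r - tau) * x (r - tau))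
                 + (- s * y r + c * y (r - tau) * x (r - tau)))) (T2 + tau) (- B) s Hs) as [T [HT HT']].
  - intros t Ht. apply D_opp. apply D_plus. apply D_scal. apply D_shift.
    apply (S_dx _ _ _ _ _ _ _ HS). lra. apply (S_dy _ _ _ _ _ _ _ HS). lra.
  - intros t Ht Hle.
    assert (Hx1 : 0 <= x (t - tau)) by (apply (S_xnn _ _ _ _ _ _ _ HS); lra).
    assert (Hx2 : x (t - tau) <= 2) by (assert (H := HT2' (t - tau) ltac:(lra)); lra).
    assert (Hq : 0 <= (x (t - tau) - 1/2) ^ 2) by apply pow2_ge_0.
    assert (c * (x (t - tau) * (1 - x (t - tau))) <= c / 4).
    { assert (x (t - tau) * (1 - x (t - tau)) <= 1/4) by nra.
      assert (c * (x (t - tau) * (1 - x (t - tau))) <= c * (1/4)) by (apply Rmult_le_compat_l; lra). lra. }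
    assert (c * x (t - tau) <= 2 * c) by nra.
    assert (s * y t >= s * (B - c * x (t - tau))) by (apply Rmult_ge_compat_l; lra).
    nra.
  - exists T. split; [lra|]. intros t Ht. specialize (HT' t Ht).
    assert (0 <= x (t - tau)) by (apply (S_xnn _ _ _ _ _ _ _ HS); lra).
    assert (0 <= c * x (t - tau)) by (apply Rmult_le_pos; lra). lra.
Qed.


Definition hI (x y : R -> R) := fun r => x r * y r.
Definition Pf s Y tau (x y : R -> R) t :=
  y t + cc s Y tau * (RInt (hI x y) 1 t - RInt (hI x y) 1 (t - tau)).
Definition Kc s Y tau := 1 + 2 * cc s Y tau * tau * exp (s * tau).

Lemma cont_to_continuous (h : R -> R) t : continuity_pt h t -> continuous h t.
Proof. intros H. apply continuity_pt_filterlim in H. exact H. Qed.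

Lemma ex_RInt_pos (h : R -> R) a b : (forall r, 0 < r -> continuity_pt h r) -> 0 < a -> 0 < b -> ex_RInt h a b.
Proof.
  intros Hc Ha Hb. apply (ex_RInt_continuous (V:=R_CompleteNormedModule)). intros z Hz. apply cont_to_continuous. apply Hc.
  assert (0 < Rmin a b) by (apply Rmin_glb_lt; auto). lra.
Qed.

Lemma RInt_deriv (h : R -> R) t : (forall r, 0 < r -> continuity_pt h r) -> 0 < t ->
  is_derive (RInt h 1) t (h t).
Proof.
  intros Hc Ht. apply (is_derive_RInt h (RInt h 1) 1 t).
  - assert (Hp : 0 < t / 2) by lra. exists (mkposreal _ Hp). intros b Hb.
    change (Rabs (b - t) < t / 2) in Hb. apply Rabs_def2 in Hb.
    apply (RInt_correct (V:=R_CompleteNormedModule)). apply ex_RInt_pos; auto; lra.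
  - apply cont_to_continuous; auto.
Qed.

Lemma S_ch s Y tau phi psi x y : Setup s Y tau phi psi x y ->
  forall r, 0 < r -> continuity_pt (hI x y) r.
Proof.
  intros HS r Hr. assert (Htau := su_tau _ _ _ _ _ _ _ HS). unfold hI.
  apply (continuity_pt_mult x y). apply (S_cx _ _ _ _ _ _ _ HS); lra. apply (S_cy _ _ _ _ _ _ _ HS); lra.
Qed.

Lemma S_dP s Y tau phi psi x y : Setup s Y tau phi psi x y ->
  forall t, tau < t -> is_derive (Pf s Y tau x y) t (y t * (cc s Y tau * x t - s)).
Proof.
  intros HS t Ht. assert (Htau := su_tau _ _ _ _ _ _ _ HS).
  unfold Pf. eapply D_eq; [|apply D_plus; [apply (S_dy _ _ _ _ _ _ _ HS); lra|]].
  2: { apply D_scal. apply D_minus. apply RInt_deriv. apply (S_ch _ _ _ _ _ _ _ HS). lra.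
       apply (D_shift (RInt (hI x y) 1)). apply RInt_deriv. apply (S_ch _ _ _ _ _ _ _ HS). lra. }
  unfold hI. ring.
Qed.

Lemma S_Pb s Y tau phi psi x y : Setup s Y tau phi psi x y -> (0 < tau \/ 0 < psi 0) ->
  forall t, tau < t -> (forall r, t - tau <= r <= t -> x r <= 2) ->
  y t <= Pf s Y tau x y t <= Kc s Y tau * y t.
Proof.
  intros HS Hcase t Ht Hx2.
  assert (Hs := su_s _ _ _ _ _ _ _ HS). assert (HY := su_Y _ _ _ _ _ _ _ HS).
  assert (Htau := su_tau _ _ _ _ _ _ _ HS).
  assert (Hc : 0 < cc s Y tau) by (unfold cc; apply Rmult_lt_0_compat; [lra|apply exp_pos]).
  assert (Hch := S_ch _ _ _ _ _ _ _ HS).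
  assert (Hyt : 0 <= y t) by (apply (S_ynn _ _ _ _ _ _ _ HS); auto; lra).
  assert (Hchas : RInt (hI x y) 1 t - RInt (hI x y) 1 (t - tau) = RInt (hI x y) (t - tau) t).
  { assert (H := RInt_Chasles (V:=R_CompleteNormedModule) (hI x y) 1 (t - tau) t).
    simpl in H. unfold plus in H; simpl in H. rewrite <- H. ring.
    apply ex_RInt_pos; auto; lra. apply ex_RInt_pos; auto; lra. }
  assert (Hex : ex_RInt (hI x y) (t - tau) t) by (apply ex_RInt_pos; auto; lra).
  assert (H0 : 0 <= RInt (hI x y) (t - tau) t).
  { apply RInt_ge_0; auto. lra. intros r Hr. unfold hI. apply Rmult_le_pos.
    apply (S_xnn _ _ _ _ _ _ _ HS); lra. apply (S_ynn _ _ _ _ _ _ _ HS); auto; lra. }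
  assert (H1 : RInt (hI x y) (t - tau) t <= tau * (2 * exp (s * tau) * y t)).
  { assert (H := RInt_le (hI x y) (fun _ => 2 * exp (s * tau) * y t) (t - tau) t ltac:(lra) Hex).
    rewrite (RInt_const (V:=R_CompleteNormedModule)) in H. simpl in H. unfold scal in H; simpl in H.
    unfold mult in H; simpl in H. replace (t - (t - tau)) with tau in H by ring. apply H.
    apply ex_RInt_const. intros r Hr. unfold hI.
    assert (Hxr : 0 <= x r) by (apply (S_xnn _ _ _ _ _ _ _ HS); lra).
    assert (Hyr : 0 <= y r) by (apply (S_ynn _ _ _ _ _ _ _ HS); auto; lra).
    assert (Hz := S_zmono _ _ _ _ _ _ _ HS Hcase r t ltac:(lra)).
    assert (Hyr2 : y r <= y t * exp (s * tau)).
    { assert (Heq : exp (s * t) = exp (s * r) * exp (s * (t - r))) by (rewrite <- exp_plus; f_equal; ring).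
      rewrite Heq in Hz. assert (Her := exp_pos (s * r)).
      assert (y r <= y t * exp (s * (t - r))) by nra.
      assert (exp (s * (t - r)) <= exp (s * tau)) by (apply exp_le; apply Rmult_le_compat_l; lra). nra. }
    assert (Hx2r := Hx2 r ltac:(lra)).
    assert (x r * y r <= 2 * y r) by nra. nra. }
  unfold Pf. rewrite Hchas. unfold Kc. split.
  - assert (0 <= cc s Y tau * RInt (hI x y) (t - tau) t) by (apply Rmult_le_pos; lra). lra.
  - assert (cc s Y tau * RInt (hI x y) (t - tau) t <= cc s Y tau * (tau * (2 * exp (s * tau) * y t))) by (apply Rmult_le_compat_l; lra).
    nra.
Qed.


Lemma char_parts s Y tau xe ye a b :
  let e := exp (- tau * a) in let co := cos (- tau * b) in let si := sin (- tau * b) in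
  let p1 := a - (jacA11 xe ye + jacB11 * e * co) in
  let p2 := b - jacB11 * e * si in
  let q1 := a - (jacA22 s + jacB22 s Y tau xe * e * co) in
  let q2 := b - jacB22 s Y tau xe * e * si in
  let m1 := - (jacA12 xe + jacB12 * e * co) in
  let m2 := - (jacB12 * e * si) in
  let n1 := - (jacA21 + jacB21 s Y tau ye * e * co) in
  let n2 := - (jacB21 s Y tau ye * e * si) in
  char_fun s Y tau xe ye (a, b) = (p1 * q1 - p2 * q2 - (m1 * n1 - m2 * n2), p1 * q2 + p2 * q1 - (m1 * n2 + m2 * n1)).
Proof.
  intros. unfold char_fun, cexp. simpl.
  replace (- tau * a - 0 * b) with (- tau * a) by ring.
  replace (- tau * b + 0 * a) with (- tau * b) by ring.
  unfold Cminus, Cplus, Cmult, Copp, RtoC; simpl.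
  apply injective_projections; simpl; unfold e, co, si, p1, p2, q1, q2, m1, m2, n1, n2.
  - subst e co si p1 p2 q1 q2 m1 m2 n1 n2. ring.
  - subst e co si p1 p2 q1 q2 m1 m2 n1 n2. ring.
Qed.

Lemma tau_lt_iff s Y tau : 0 < s -> 0 < Y -> (tau < tau_c s Y <-> s < Y * exp (- s * tau)).
Proof.
  intros Hs HY. unfold tau_c.
  assert (HYs : 0 < Y / s) by (apply Rdiv_lt_0_compat; auto).
  assert (Hk : Y * exp (- s * tau) = s * (Y / s) / exp (s * tau)).
  { replace (- s * tau) with (- (s * tau)) by ring. rewrite exp_Ropp. field. split; [lra|]. apply Rgt_not_eq, exp_pos. }
  rewrite Hk. assert (He := exp_pos (s * tau)).
  split; intros H.
  - assert (s * tau < ln (Y / s)).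
    { apply Rmult_lt_compat_l with (r := s) in H; auto. rewrite <- Rmult_assoc, Rinv_r in H; lra. }
    apply exp_increasing in H0. rewrite exp_ln in H0 by auto.
    apply Rmult_lt_reg_r with (exp (s * tau)); auto. unfold Rdiv. rewrite Rmult_assoc, Rinv_l by lra. nra.
  - assert (exp (s * tau) < Y / s).
    { apply Rmult_lt_compat_r with (r := exp (s * tau)) in H; auto.
      unfold Rdiv in H. rewrite Rmult_assoc, Rinv_l in H by lra. nra. }
    rewrite <- (exp_ln (Y / s)) in H0 by auto. apply exp_lt_inv in H0.
    apply Rmult_lt_reg_l with s; auto. rewrite <- Rmult_assoc, Rinv_r by lra. lra.
Qed.

Lemma tau_gt_iff s Y tau : 0 < s -> 0 < Y -> (tau_c s Y < tau <-> Y * exp (- s * tau) < s).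
Proof.
  intros Hs HY. unfold tau_c.
  assert (HYs : 0 < Y / s) by (apply Rdiv_lt_0_compat; auto).
  assert (Hk : Y * exp (- s * tau) = s * (Y / s) / exp (s * tau)).
  { replace (- s * tau) with (- (s * tau)) by ring. rewrite exp_Ropp. field. split; [lra|]. apply Rgt_not_eq, exp_pos. }
  rewrite Hk. assert (He := exp_pos (s * tau)).
  split; intros H.
  - assert (ln (Y / s) < s * tau).
    { apply Rmult_lt_compat_l with (r := s) in H; auto. rewrite <- Rmult_assoc, Rinv_r in H; lra. }
    apply exp_increasing in H0. rewrite exp_ln in H0 by auto.
    apply Rmult_lt_reg_r with (exp (s * tau)); auto. unfold Rdiv. rewrite Rmult_assoc, Rinv_l by lra. nra.
  - assert (Y / s < exp (s * tau)).
    { apply Rmult_lt_compat_r with (r := exp (s * tau)) in H; auto.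
      unfold Rdiv in H. rewrite Rmult_assoc, Rinv_l in H by lra. nra. }
    rewrite <- (exp_ln (Y / s)) in H0 by auto. apply exp_lt_inv in H0.
    apply Rmult_lt_reg_l with s; auto. rewrite <- Rmult_assoc, Rinv_r by lra. lra.
Qed.

Lemma E0_unstable s Y tau : unstable s Y tau 0 0.
Proof.
  exists (1, 0). split; [|simpl; lra].
  rewrite char_parts. unfold RtoC, jacA11, jacA12, jacA21, jacA22, jacB11, jacB12, jacB21, jacB22.
  apply injective_projections; simpl; ring.
Qed.

Lemma E1_unstable s Y tau : 0 < s -> 0 < Y -> 0 <= tau -> s < Y * exp (- s * tau) -> unstable s Y tau 1 0.
Proof.
  intros Hs HY Ht Hc. set (c := Y * exp (- s * tau)) in *.
  set (f := fun r => r + s - c * exp (- tau * r)).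
  assert (Hf : continuity f).
  { intros r. apply (der_cont f r (1 - c * (- tau * exp (- tau * r)))). unfold f.
    apply D_minus. eapply D_eq; [|apply D_plus; [apply D_id|apply D_const]]. ring.
    apply D_scal. apply D_exp_lin. }
  assert (Hf0 : f 0 < 0) by (unfold f; rewrite Rmult_0_r, exp_0; lra).
  assert (Hc0 : 0 < c) by lra.
  assert (Hfc : 0 < f c).
  { unfold f. assert (exp (- tau * c) <= 1) by (rewrite <- exp_0; apply exp_le; nra).
    assert (c * exp (- tau * c) <= c) by nra. lra. }
  destruct (IVT f 0 c Hf Hc0 Hf0 Hfc) as [r [Hr Hfr]].
  assert (Hr0 : r <> 0) by (intros ->; lra).
  exists (r, 0). split; [|simpl; lra].
  rewrite char_parts. unfold RtoC, jacA11, jacA12, jacA21, jacA22, jacB11, jacB12, jacB21, jacB22.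
  replace (- tau * 0) with 0 by ring. rewrite cos_0, sin_0.
  unfold f in Hfr. fold c.
  apply injective_projections; simpl.
  - replace (r - (- s + c * 1 * exp (- tau * r) * 1)) with (r + s - c * exp (- tau * r)) by ring.
    rewrite Hfr. ring.
  - ring.
Qed.

Lemma E1_stable s Y tau : 0 < s -> 0 < Y -> 0 <= tau -> Y * exp (- s * tau) < s -> loc_asym_stable s Y tau 1 0.
Proof.
  intros Hs HY Ht Hc [a b] H. simpl.
  rewrite char_parts in H. unfold RtoC, jacA11, jacA12, jacA21, jacA22, jacB11, jacB12, jacB21, jacB22 in H.
  set (c := Y * exp (- s * tau)) in *.
  set (e := exp (- tau * a)) in *. set (co := cos (- tau * b)) in *. set (si := sin (- tau * b)) in *.
  assert (H1 := f_equal fst H). assert (H2 := f_equal snd H). simpl in H1, H2.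
  destruct (Rlt_le_dec a 0) as [|Ha]; auto. exfalso.
  set (q1 := a - (- s + c * 1 * e * co)) in *. set (q2 := b - c * 1 * e * si) in *.
  assert (E1 : (a + 1) * q1 - b * q2 = 0).
  { unfold q1, q2 in *. rewrite <- H1. ring. }
  assert (E2 : (a + 1) * q2 + b * q1 = 0).
  { unfold q1, q2 in *. rewrite <- H2. ring. }
  assert (Hq1 : ((a + 1) ^ 2 + b ^ 2) * q1 = 0).
  { replace (((a + 1) ^ 2 + b ^ 2) * q1) with ((a + 1) * ((a + 1) * q1 - b * q2) + b * ((a + 1) * q2 + b * q1)) by ring.
    rewrite E1, E2. ring. }
  assert (Hpos : 0 < (a + 1) ^ 2 + b ^ 2) by nra.
  assert (Hq0 : q1 = 0).
  { apply Rmult_integral in Hq1. destruct Hq1; lra. }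
  assert (He1 : e <= 1) by (unfold e; rewrite <- exp_0; apply exp_le; nra).
  assert (He0 : 0 < e) by (unfold e; apply exp_pos).
  assert (Hco : co <= 1) by (unfold co; apply COS_bound).
  assert (Hc0 : 0 < c) by (unfold c; apply Rmult_lt_0_compat; [lra|apply exp_pos]).
  assert (c * e * co <= c * e * 1) by (apply Rmult_le_compat_l; [apply Rmult_le_pos|]; lra).
  assert (c * e <= c * 1) by (apply Rmult_le_compat_l; lra).
  replace (c * 1 * e * co) with (c * e * co) in Hq0 by ring.
  unfold q1 in Hq0. lra.
Qed.

Lemma Eplus_pos_iff s Y tau : 0 < s -> 0 < Y ->
  ((0 < x_plus s Y tau /\ 0 < y_plus s Y tau) <-> tau < tau_c s Y).
Proof.
  intros Hs HY. rewrite tau_lt_iff by auto. unfold x_plus, y_plus.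
  assert (He := exp_pos (s * tau)).
  assert (Hk : Y * exp (- s * tau) = Y / exp (s * tau)).
  { replace (- s * tau) with (- (s * tau)) by ring. rewrite exp_Ropp. field. lra. }
  rewrite Hk.
  assert (Hx : 0 < s / Y * exp (s * tau)) by (apply Rmult_lt_0_compat; [apply Rdiv_lt_0_compat|]; auto).
  split.
  - intros [_ H]. apply Rmult_lt_reg_r with (exp (s * tau)); auto.
    unfold Rdiv. rewrite Rmult_assoc, Rinv_l by lra.
    assert (s / Y * exp (s * tau) * Y < 1 * Y) by (apply Rmult_lt_compat_r; lra).
    replace (s / Y * exp (s * tau) * Y) with (s * exp (s * tau)) in H0 by (field; lra). lra.
  - intros H. split; auto.
    assert (s * exp (s * tau) < Y).
    { apply Rmult_lt_compat_r with (r := exp (s * tau)) in H; auto.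
      unfold Rdiv in H. rewrite Rmult_assoc, Rinv_l in H by lra. lra. }
    assert (s / Y * exp (s * tau) < 1).
    { replace (s / Y * exp (s * tau)) with (s * exp (s * tau) / Y) by (field; lra).
      apply Rmult_lt_reg_r with Y; auto. unfold Rdiv. rewrite Rmult_assoc, Rinv_l by lra. lra. }
    lra.
Qed.

Lemma Eplus_stable0 s Y : 0 < s -> 0 < Y -> 0 < y_plus s Y 0 ->
  loc_asym_stable s Y 0 (x_plus s Y 0) (y_plus s Y 0).
Proof.
  intros Hs HY Hyp [a b] H. simpl.
  unfold x_plus, y_plus in *. rewrite Rmult_0_r, exp_0 in *.
  rewrite char_parts in H. unfold RtoC, jacA11, jacA12, jacA21, jacA22, jacB11, jacB12, jacB21, jacB22 in H.
  rewrite Rmult_0_r, exp_0 in H.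
  replace (- 0 * a) with 0 in H by ring. replace (- 0 * b) with 0 in H by ring.
  rewrite exp_0, cos_0, sin_0 in H.
  assert (H1 := f_equal fst H). assert (H2 := f_equal snd H). simpl in H1, H2.
  set (xe := s / Y * 1) in *.
  assert (Hxe : 0 < xe) by (unfold xe; rewrite Rmult_1_r; apply Rdiv_lt_0_compat; auto).
  assert (HYxe : Y * 1 * xe * 1 * 1 = s) by (unfold xe; field; lra).
  assert (E1 : a * a + xe * a - b * b + xe * (Y * (1 - xe)) = 0).
  { rewrite <- H1. rewrite HYxe. ring. }
  assert (E2 : b * (2 * a + xe) = 0).
  { rewrite <- H2. rewrite HYxe. ring. }
  assert (Hd : 0 < xe * (Y * (1 - xe))) by (apply Rmult_lt_0_compat; auto; apply Rmult_lt_0_compat; lra).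
  apply Rmult_integral in E2. destruct E2 as [Hb|Ha].
  - subst b. nra.
  - lra.
Qed.


Lemma hcase_X0 tau phi psi : 0 <= tau -> in_X0 tau phi psi -> 0 < tau \/ 0 < psi 0.
Proof.
  intros Ht [[_ [_ HX]] [Hp0 [th [Hth Hpp]]]].
  destruct (Rlt_le_dec 0 tau) as [|Hle]; [left; auto|right].
  assert (th = 0) by lra. subst th.
  destruct (HX 0 ltac:(lra)) as [_ Hps]. destruct (Req_dec (psi 0) 0) as [E|]; [|lra].
  rewrite E in Hpp. lra.
Qed.

Lemma exp_small A e v : 0 <= A -> 0 < e -> 0 <= v -> A <= e * v -> A * exp (- v) < e.
Proof.
  intros HA He Hv HAv. rewrite exp_Ropp.
  assert (H1 := exp_ineq1_le v). assert (Hev := exp_pos v).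
  apply Rmult_lt_reg_r with (exp v); auto. rewrite Rmult_assoc, Rinv_l by lra. nra.
Qed.

Lemma ln_le_inv a b : 0 < a -> 0 < b -> ln a <= ln b -> a <= b.
Proof. intros Ha Hb H. rewrite <- (exp_ln a), <- (exp_ln b) by auto. apply exp_le; auto. Qed.

Lemma D_lnx s Y tau phi psi x y : Setup s Y tau phi psi x y ->
  forall t, 0 < t -> is_derive (fun r => ln (x r)) t (1 - x t - y t).
Proof.
  intros HS t Ht. assert (Hx := S_xpos _ _ _ _ _ _ _ HS t ltac:(lra)).
  eapply D_eq; [|apply D_ln; [auto|apply (S_dx _ _ _ _ _ _ _ HS); auto]]. field. lra.
Qed.

Lemma x_to_1_of_y s Y tau phi psi x y : Setup s Y tau phi psi x y -> (0 < tau \/ 0 < psi 0) ->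
  (forall e, 0 < e -> exists T, forall t, T <= t -> y t < e) -> is_lim x p_infty 1.
Proof.
  intros HS Hcase Hy. apply to_is_lim. intros e He.
  destruct (S_xle _ _ _ _ _ _ _ HS Hcase (e/2) ltac:(lra)) as [T1 [HT1 HT1']].
  set (e' := Rmin (e/2) (1/2)).
  assert (He' : 0 < e' /\ e' <= e/2 /\ e' <= 1/2) by (unfold e'; apply Rmin_case_strong; lra).
  destruct (Hy (e'/2) ltac:(lra)) as [T2 HT2].
  destruct (trap (fun r => ln (x r)) (fun r => 1 - x r - y r) (Rmax 0 T2) (ln (1 - e')) (e'/2) ltac:(lra)) as [T3 [HT3 HT3']].
  - intros t Ht. apply (D_lnx _ _ _ _ _ _ _ HS). assert (0 <= Rmax 0 T2) by apply Rmax_l. lra.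
  - intros t Ht Hle. assert (Hm := Rmax_l 0 T2). assert (Hm2 := Rmax_r 0 T2).
    assert (x t <= 1 - e') by (apply ln_le_inv; auto; [apply (S_xpos _ _ _ _ _ _ _ HS); lra|lra]).
    specialize (HT2 t ltac:(lra)). lra.
  - exists (Rmax T1 T3). intros t Ht. assert (Hm := Rmax_l T1 T3). assert (Hm2 := Rmax_r T1 T3).
    specialize (HT1' t ltac:(lra)). specialize (HT3' t ltac:(lra)).
    assert (1 - e' <= x t) by (apply ln_le_inv; auto; [lra|apply (S_xpos _ _ _ _ _ _ _ HS); lra]).
    apply Rabs_def1; lra.
Qed.

Lemma part2b s Y tau phi psi x y : Setup s Y tau phi psi x y -> in_X0 tau phi psi ->
  Y * exp (- s * tau) < s -> is_lim x p_infty 1 /\ is_lim y p_infty 0.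
Proof.
  intros HS HX0 Hcs.
  assert (Hs := su_s _ _ _ _ _ _ _ HS). assert (HY := su_Y _ _ _ _ _ _ _ HS).
  assert (Htau := su_tau _ _ _ _ _ _ _ HS).
  assert (Hcase := hcase_X0 _ _ _ Htau HX0).
  assert (Hc : 0 < cc s Y tau) by (unfold cc; apply Rmult_lt_0_compat; [lra|apply exp_pos]).
  change (Y * exp (- s * tau)) with (cc s Y tau) in Hcs.
  set (c := cc s Y tau) in *.
  set (d := Rmin 1 ((s - c) / (2 * c))).
  assert (Hd : 0 < d /\ d <= 1 /\ c * (1 + d) <= (s + c) / 2).
  { assert (Hq : c * ((s - c) / (2 * c)) = (s - c) / 2) by (field; lra).
    assert (Hq2 : 0 < (s - c) / (2 * c)) by (apply Rdiv_lt_0_compat; lra).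
    unfold d. apply Rmin_case_strong; intros Hm.
    - split; [lra|split; [lra|]]. assert (c * 1 <= c * ((s - c) / (2 * c))) by (apply Rmult_le_compat_l; lra). lra.
    - split; [lra|split; [lra|]]. lra. }
  destruct (S_xle _ _ _ _ _ _ _ HS Hcase d ltac:(lra)) as [Tx [HTx HTx']].
  set (K := Kc s Y tau).
  assert (HK : 1 <= K).
  { unfold K, Kc. assert (0 <= 2 * cc s Y tau * tau * exp (s * tau)).
    { apply Rmult_le_pos; [|apply Rlt_le, exp_pos]. apply Rmult_le_pos; [|lra]. fold c; lra. } lra. }
  set (k := (s - c) / 2).
  set (TP := Tx + tau + 1).
  assert (HPb : forall t, TP <= t -> y t <= Pf s Y tau x y t <= K * y t).
  { intros t Ht. apply (S_Pb _ _ _ _ _ _ _ HS Hcase). unfold TP in Ht; lra.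
    intros r Hr. specialize (HTx' r ltac:(unfold TP in Ht; lra)). lra. }
  assert (Hdec := exp_decay (Pf s Y tau x y) (fun t => y t * (c * x t - s)) TP (k / K)).
  assert (Hdec' : forall t, TP <= t -> Pf s Y tau x y t <= Pf s Y tau x y TP * exp (- (k / K) * (t - TP))).
  { apply Hdec.
    - intros t Ht. apply (S_dP _ _ _ _ _ _ _ HS). unfold TP in Ht; lra.
    - intros t Ht. destruct (HPb t Ht) as [H1 H2].
      assert (Hy0 : 0 <= y t) by (apply (S_ynn _ _ _ _ _ _ _ HS); auto; unfold TP in Ht; lra).
      assert (Hx1 : x t <= 1 + d) by (apply HTx'; unfold TP in Ht; lra).
      assert (c * x t - s <= - k) by (unfold k; nra).
      assert (y t * (c * x t - s) <= - k * y t) by nra.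
      assert (Hk0 : 0 < k) by (unfold k; lra).
      assert (k / K * Pf s Y tau x y t <= k * y t).
      { apply Rmult_le_reg_r with K; [lra|]. replace (k / K * Pf s Y tau x y t * K) with (k * Pf s Y tau x y t) by (field; lra). nra. }
      lra. }
  assert (Hylim : forall e, 0 < e -> exists T, forall t, T <= t -> y t < e).
  { intros e He. set (A := Pf s Y tau x y TP).
    assert (HA : 0 <= A) by (destruct (HPb TP ltac:(lra)); assert (0 <= y TP) by (apply (S_ynn _ _ _ _ _ _ _ HS); auto; unfold TP; lra); unfold A; lra).
    assert (Hk0 : 0 < k / K) by (apply Rdiv_lt_0_compat; unfold k; lra).
    exists (TP + A / (e * (k / K))). intros t Ht.
    assert (Hq : 0 <= A / (e * (k / K))) by (apply Rdiv_le_0_compat; [lra|apply Rmult_lt_0_compat; lra]).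
    destruct (HPb t ltac:(lra)) as [H1 _]. specialize (Hdec' t ltac:(lra)).
    assert (A * exp (- (k / K * (t - TP))) < e).
    { apply exp_small; auto. apply Rmult_le_pos; lra.
      assert (Hk1 : 0 < k) by (unfold k; lra).
      assert (A = e * (k / K) * (A / (e * (k / K)))) by (field; repeat split; lra).
      assert (e * (k / K) * (A / (e * (k / K))) <= e * (k / K) * (t - TP)).
      { apply Rmult_le_compat_l. apply Rmult_le_pos; lra. lra. }
      nra. }
    replace (- (k / K) * (t - TP)) with (- (k / K * (t - TP))) in Hdec' by ring.
    fold A in Hdec'. lra. }
  split.
  - apply (x_to_1_of_y _ _ _ _ _ _ _ HS Hcase Hylim).
  - apply to_is_lim. intros e He. destruct (Hylim e He) as [T HT]. exists (Rmax T 0). intros t Ht.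
    assert (Hm := Rmax_l T 0). assert (Hm2 := Rmax_r T 0).
    assert (0 <= y t) by (apply (S_ynn _ _ _ _ _ _ _ HS); auto; lra).
    specialize (HT t ltac:(lra)). apply Rabs_def1; lra.
Qed.


Lemma conv_cauchy (f : R -> R) l :
  (forall e, 0 < e -> exists T, forall t, T <= t -> Rabs (f t - l) < e) -> Cauchy_inf f.
Proof.
  intros H e He. destruct (H (e/2) ltac:(lra)) as [T HT]. exists T. intros t t' Ht Ht'.
  assert (H1 := HT t Ht). assert (H2 := HT t' Ht').
  apply Rabs_def2 in H1. apply Rabs_def2 in H2. apply Rabs_def1; lra.
Qed.

Lemma lnlow m a : 0 < m -> 0 < a -> m - m * ln m <= a - m * ln a.
Proof.
  intros Hm Ha. assert (H := exp_ineq1_le (ln (a / m))).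
  rewrite exp_ln in H by (apply Rdiv_lt_0_compat; auto).
  unfold Rdiv in H. rewrite ln_mult, ln_Rinv in H by (auto; apply Rinv_0_lt_compat; auto).
  assert (m * (1 + (ln a + - ln m)) <= m * (a * / m)) by (apply Rmult_le_compat_l; lra).
  replace (m * (a * / m)) with a in H0 by (field; lra). nra.
Qed.

Lemma S_ypos0 s Y phi psi x y : Setup s Y 0 phi psi x y -> 0 < psi 0 -> forall t, 0 <= t -> 0 < y t.
Proof.
  intros HS Hp. assert (Hs := su_s _ _ _ _ _ _ _ HS).
  assert (Hy0 : 0 < y 0) by (destruct (S_x0 _ _ _ _ _ _ _ HS) as [_ ->]; auto).
  destruct (S_ey _ _ _ _ _ _ _ HS 0 ltac:(lra) (y 0 / 2) ltac:(lra)) as [d [Hd Hd2]].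
  assert (Hnear : forall t, 0 <= t < d -> 0 < y t).
  { intros t Ht. assert (H := Hd2 t ltac:(lra) ltac:(apply Rabs_def1; lra)). apply Rabs_def2 in H. lra. }
  intros t Ht. destruct (Rlt_le_dec t d) as [|Htd]. apply Hnear; lra.
  assert (Hz := S_zmono _ _ _ _ _ _ _ HS (or_intror Hp) (d/2) t ltac:(lra)).
  assert (0 < y (d/2)) by (apply Hnear; lra).
  assert (0 < y (d/2) * exp (s * (d/2))) by (apply Rmult_lt_0_compat; [lra|apply exp_pos]).
  assert (Het := exp_pos (s * t)).
  destruct (Rlt_le_dec 0 (y t)); auto. nra.
Qed.

Lemma part3a s Y phi psi x y : Setup s Y 0 phi psi x y -> 0 < psi 0 -> 0 < 1 - s / Y ->
  is_lim x p_infty (s / Y) /\ is_lim y p_infty (1 - s / Y).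
Proof.
  intros HS Hp Hys.
  assert (Hs := su_s _ _ _ _ _ _ _ HS). assert (HY := su_Y _ _ _ _ _ _ _ HS).
  assert (Hcase : 0 < 0 \/ 0 < psi 0) by auto.
  set (xs := s / Y) in *. set (ys := 1 - xs) in *.
  assert (Hxs : 0 < xs) by (unfold xs; apply Rdiv_lt_0_compat; auto).
  assert (Hxpos := S_xpos _ _ _ _ _ _ _ HS).
  assert (Hypos := S_ypos0 _ _ _ _ _ _ HS Hp).
  assert (HccY : cc s Y 0 = Y) by (unfold cc; rewrite Rmult_0_r, exp_0; ring).
  set (V := fun t => x t - xs * ln (x t) + / Y * (y t - ys * ln (y t))).
  assert (HdV : forall t, 0 < t -> is_derive V t (- (x t - xs) ^ 2)).
  { intros t Ht. assert (Hx := Hxpos t ltac:(lra)). assert (Hy := Hypos t ltac:(lra)).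
    assert (Hdx := S_dx _ _ _ _ _ _ _ HS t Ht). assert (Hdy := S_dy _ _ _ _ _ _ _ HS t Ht).
    rewrite HccY in Hdy. replace (t - 0) with t in Hdy by ring.
    eapply D_eq; [|apply D_plus; [apply D_minus; [apply Hdx|apply D_scal; apply D_ln; [auto|apply Hdx]]|
                                  apply D_scal; apply D_minus; [apply Hdy|apply D_scal; apply D_ln; [auto|apply Hdy]]]].
    unfold ys, xs. field. repeat split; lra. }
  assert (Hmon : forall a b, 1 <= a <= b -> V b <= V a).
  { intros a b Hab. assert (H := deriv_le V (fun t => - (x t - xs) ^ 2) a b 0 ltac:(lra)).
    assert (V b - V a <= 0 * (b - a)); [|lra]. apply H.
    intros t Ht; apply HdV; lra. intros t Ht. assert (0 <= (x t - xs) ^ 2) by apply pow2_ge_0. lra. }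
  assert (HVlow : forall t, 1 <= t -> (xs - xs * ln xs) + / Y * (ys - ys * ln ys) <= V t).
  { intros t Ht. unfold V. assert (H1 := lnlow xs (x t) Hxs (Hxpos t ltac:(lra))).
    assert (H2 := lnlow ys (y t) Hys (Hypos t ltac:(lra))).
    assert (/ Y * (ys - ys * ln ys) <= / Y * (y t - ys * ln (y t))) by (apply Rmult_le_compat_l; [apply Rlt_le, Rinv_0_lt_compat|]; lra).
    lra. }
  assert (HVc := mono_cauchy V 1 _ Hmon HVlow).
  destruct (S_xle _ _ _ _ _ _ _ HS Hcase 1 ltac:(lra)) as [T1 [HT1 HT1']].
  destruct (S_ybound _ _ _ _ _ _ _ HS Hcase) as [T2 [HT2 HT2']].
  set (B := Bconst s Y 0) in *.
  set (T0 := Rmax 1 (Rmax T1 T2)).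
  assert (HT0 : forall t, T0 <= t -> 1 <= t /\ 0 < x t /\ x t <= 2 /\ 0 < y t /\ y t <= B).
  { intros t Ht. assert (1 <= t /\ T1 <= t /\ T2 <= t) as [Ha [Hb Hc]].
    { revert Ht. unfold T0, Rmax. repeat destruct Rle_dec; intros; lra. }
    split; [lra|]. split; [apply Hxpos; lra|]. split; [specialize (HT1' t Hb); lra|]. split; [apply Hypos; lra|]. apply HT2'; lra. }
  assert (HB0 : 0 < B) by (destruct (HT0 T0 ltac:(lra)) as [_ [_ [_ [H1 H2]]]]; lra).
  set (K1 := 2 * (3 + B) + 1).
  assert (Hlipx : forall a b, T0 <= a -> a <= b -> Rabs (x b - x a) <= K1 * (b - a)).
  { apply (lip_of_deriv x (fun t => x t * (1 - x t) - y t * x t)).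
    - intros t Ht. apply (S_dx _ _ _ _ _ _ _ HS). destruct (HT0 t Ht); lra.
    - intros t Ht. destruct (HT0 t Ht) as [_ [H1 [H2 [H3 H4]]]]. apply Rabs_le. unfold K1.
      split; nra. }
  assert (Hxlim : forall e, 0 < e -> exists T, forall t, T <= t -> Rabs (x t - xs) < e).
  { intros e He.
    assert (Hb1 := barbalat V (fun t => - (x t - xs) ^ 2) (fun t => x t - xs) T0 K1 ltac:(unfold K1; lra) HVc).
    assert (Hb2 := barbalat V (fun t => - (x t - xs) ^ 2) (fun t => xs - x t) T0 K1 ltac:(unfold K1; lra) HVc).
    destruct Hb1 with (e := e) as [Ta HTa]; auto.
    { intros t Ht. apply HdV. destruct (HT0 t Ht); lra. }
    { intros a b Ha Hab. replace (x b - xs - (x a - xs)) with (x b - x a) by ring. auto. }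
    { intros e' He'. exists (e' * e'), T0. split; [nra|]. intros t Ht Hu. simpl. nra. }
    destruct Hb2 with (e := e) as [Tb HTb]; auto.
    { intros t Ht. apply HdV. destruct (HT0 t Ht); lra. }
    { intros a b Ha Hab. replace (xs - x b - (xs - x a)) with (- (x b - x a)) by ring. rewrite Rabs_Ropp. auto. }
    { intros e' He'. exists (e' * e'), T0. split; [nra|]. intros t Ht Hu. simpl. nra. }
    exists (Rmax Ta Tb). intros t Ht. assert (Hm := Rmax_l Ta Tb). assert (Hm2 := Rmax_r Ta Tb).
    specialize (HTa t ltac:(lra)). specialize (HTb t ltac:(lra)). apply Rabs_def1; lra. }
  set (K2 := B * (s + 2 * Y) + 1).
  assert (Hlipy : forall a b, T0 <= a -> a <= b -> Rabs (y b - y a) <= K2 * (b - a)).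
  { apply (lip_of_deriv y (fun t => - s * y t + cc s Y 0 * y (t - 0) * x (t - 0))).
    - intros t Ht. apply (S_dy _ _ _ _ _ _ _ HS). destruct (HT0 t Ht); lra.
    - intros t Ht. destruct (HT0 t Ht) as [_ [H1 [H2 [H3 H4]]]]. rewrite HccY. replace (t - 0) with t by ring.
      assert (E1 : 0 <= Y * y t * x t) by (apply Rmult_le_pos; [apply Rmult_le_pos|]; lra).
      assert (E2 : y t * x t <= B * 2) by (apply Rmult_le_compat; lra).
      assert (E3 : Y * (y t * x t) <= Y * (B * 2)) by (apply Rmult_le_compat_l; lra).
      assert (E4 : s * y t <= s * B) by (apply Rmult_le_compat_l; lra).
      assert (E5 : 0 <= s * y t) by (apply Rmult_le_pos; lra).
      apply Rabs_le. unfold K2. split; nra. }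
  assert (Hxc := conv_cauchy x xs Hxlim).
  assert (Hxc' : Cauchy_inf (fun t => - x t)).
  { intros e He. destruct (Hxc e He) as [T HT]. exists T. intros t t' Ht Ht'.
    replace (- x t - - x t') with (- (x t - x t')) by ring. rewrite Rabs_Ropp. auto. }
  assert (Hylim : forall e, 0 < e -> exists T, forall t, T <= t -> Rabs (y t - ys) < e).
  { intros e He.
    assert (Hcond : forall e', 0 < e' -> exists T, forall t, T <= t -> Rabs (x t - xs) < Rmin (e' / 2) (xs / 2)).
    { intros e' He'. apply Hxlim. apply Rmin_glb_lt; lra. }
    assert (Hb1 := barbalat x (fun t => x t * (1 - x t) - y t * x t) (fun t => y t - ys) T0 K2 ltac:(unfold K2; nra) Hxc).
    assert (Hb2 := barbalat (fun t => - x t) (fun t => - (x t * (1 - x t) - y t * x t)) (fun t => ys - y t) T0 K2 ltac:(unfold K2; nra) Hxc').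
    destruct Hb1 with (e := e) as [Ta HTa]; auto.
    { intros t Ht. apply (S_dx _ _ _ _ _ _ _ HS). destruct (HT0 t Ht); lra. }
    { intros a b Ha Hab. replace (y b - ys - (y a - ys)) with (y b - y a) by ring. auto. }
    { intros e' He'. destruct (Hcond e' He') as [T HT]. exists (xs * e' / 4), (Rmax T T0).
      split; [nra|]. intros t Ht Hu. assert (Hm := Rmax_l T T0). assert (Hm2 := Rmax_r T T0).
      specialize (HT t ltac:(lra)). apply Rabs_def2 in HT.
      assert (Hmin1 := Rmin_l (e'/2) (xs/2)). assert (Hmin2 := Rmin_r (e'/2) (xs/2)).
      assert (Hx0 : xs / 2 <= x t) by lra.
      assert (x t * (1 - x t) - y t * x t = x t * ((xs - x t) + (ys - y t))) by (unfold ys; ring).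
      assert (x t * ((xs - x t) + (ys - y t)) <= x t * (- e' / 2)) by (apply Rmult_le_compat_l; lra).
      nra. }
    destruct Hb2 with (e := e) as [Tb HTb]; auto.
    { intros t Ht. apply D_opp. apply (S_dx _ _ _ _ _ _ _ HS). destruct (HT0 t Ht); lra. }
    { intros a b Ha Hab. replace (ys - y b - (ys - y a)) with (- (y b - y a)) by ring. rewrite Rabs_Ropp. auto. }
    { intros e' He'. destruct (Hcond e' He') as [T HT]. exists (xs * e' / 4), (Rmax T T0).
      split; [nra|]. intros t Ht Hu. assert (Hm := Rmax_l T T0). assert (Hm2 := Rmax_r T T0).
      specialize (HT t ltac:(lra)). apply Rabs_def2 in HT.
      assert (Hmin1 := Rmin_l (e'/2) (xs/2)). assert (Hmin2 := Rmin_r (e'/2) (xs/2)).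
      assert (Hx0 : xs / 2 <= x t) by lra.
      assert (- (x t * (1 - x t) - y t * x t) = x t * ((x t - xs) + (y t - ys))) by (unfold ys; ring).
      assert (x t * ((x t - xs) + (y t - ys)) <= x t * (- e' / 2)) by (apply Rmult_le_compat_l; lra).
      nra. }
    exists (Rmax Ta Tb). intros t Ht. assert (Hm := Rmax_l Ta Tb). assert (Hm2 := Rmax_r Ta Tb).
    specialize (HTa t ltac:(lra)). specialize (HTb t ltac:(lra)). apply Rabs_def1; lra. }
  split; apply to_is_lim; auto.
Qed.


Lemma Hineq (c s iK d y0 m x y w : R) :
  0 < s -> s < c -> 0 < iK <= 1 -> 0 <= d ->
  8 * s * d <= (c - s) * iK -> 8 * s * y0 <= (c - s) * iK ->
  y0 <= 1/4 -> y0 <= (1 - s / c) / 2 ->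
  m <= s / 2 -> m <= s * (1 - s / c) -> m <= (c - s) * iK / 2 ->
  0 < x <= 1 + d -> 0 <= y <= y0 -> iK <= w <= 1 ->
  m <= w * (c * x - s) + 2 * s * (1 - x - y).
Proof.
  intros Hs Hsc HiK Hd Hd8 Hy8 Hy4 Hys Hm1 Hm2 Hm3 Hx Hy Hw.
  set (xs := s / c) in *.
  assert (Hxs : c * xs = s) by (unfold xs; field; lra).
  assert (Hc0 : 0 < c) by lra.
  destruct (Rle_lt_dec (c * x) s) as [HA|HB].
  - assert (H1 : w * (c * x - s) >= c * x - s) by nra.
    assert (Hxxs : x <= xs).
    { apply Rmult_le_reg_l with c; auto. lra. }
    destruct (Rle_lt_dec (2 * s) c) as [HA1|HA2].
    + assert (0 <= (c - 2 * s) * x) by (apply Rmult_le_pos; lra). nra.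
    + assert ((c - 2 * s) * x >= (c - 2 * s) * xs) by nra.
      assert (c * xs - s = 0) by lra.
      assert (2 * s * (1 - xs - y) >= s * (1 - xs)) by nra.
      nra.
  - assert (H1 : w * (c * x - s) >= iK * (c * x - s)) by nra.
    destruct (Rle_lt_dec (2 * s) (c * iK)) as [HB1|HB2].
    + assert (Hxxs : xs <= x).
      { apply Rmult_le_reg_l with c; auto. lra. }
      assert ((c * iK - 2 * s) * (x - xs) >= 0) by nra.
      assert (2 * s * (1 - xs - y) >= s * (1 - xs)) by nra.
      assert (iK * (c * xs - s) = 0) by (rewrite Hxs; ring).
      nra.
    + assert ((c * iK - 2 * s) * (x - (1 + d)) >= 0) by nra.
      assert (c * d * iK >= 0) by (apply Rle_ge; apply Rmult_le_pos; [apply Rmult_le_pos|]; lra).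
      assert (2 * s * y <= 2 * s * y0) by nra.
      nra.
Qed.

Lemma S_ypos0' s Y tau phi psi x y : Setup s Y tau phi psi x y -> tau = 0 -> 0 < psi 0 ->
  forall t, 0 <= t -> 0 < y t.
Proof.
  intros HS Ht0 Hp. subst tau.
  assert (Hs := su_s _ _ _ _ _ _ _ HS).
  assert (Hy0 : 0 < y 0) by (destruct (S_x0 _ _ _ _ _ _ _ HS) as [_ ->]; auto).
  destruct (S_ey _ _ _ _ _ _ _ HS 0 ltac:(lra) (y 0 / 2) ltac:(lra)) as [d [Hd Hd2]].
  assert (Hnear : forall t, 0 <= t < d -> 0 < y t).
  { intros t Ht. assert (H := Hd2 t ltac:(lra) ltac:(apply Rabs_def1; lra)). apply Rabs_def2 in H. lra. }
  intros t Ht. destruct (Rlt_le_dec t d) as [|Htd]. apply Hnear; lra.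
  assert (Hz := S_zmono _ _ _ _ _ _ _ HS (or_intror Hp) (d/2) t ltac:(lra)).
  assert (0 < y (d/2)) by (apply Hnear; lra).
  assert (0 < y (d/2) * exp (s * (d/2))) by (apply Rmult_lt_0_compat; [lra|apply exp_pos]).
  assert (Het := exp_pos (s * t)).
  destruct (Rlt_le_dec 0 (y t)); auto. nra.
Qed.

Lemma S_ypos_ev s Y tau phi psi x y : Setup s Y tau phi psi x y -> in_X0 tau phi psi ->
  exists T, 0 < T /\ forall t, T <= t -> 0 < y t.
Proof.
  intros HS HX0.
  assert (Hs := su_s _ _ _ _ _ _ _ HS). assert (HY := su_Y _ _ _ _ _ _ _ HS).
  assert (Htau := su_tau _ _ _ _ _ _ _ HS).
  assert (Hcase := hcase_X0 _ _ _ Htau HX0).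
  assert (Hc : 0 < cc s Y tau) by (unfold cc; apply Rmult_lt_0_compat; [lra|apply exp_pos]).
  destruct (Rlt_le_dec 0 tau) as [Htp|Ht0].
  2: { destruct Hcase as [|Hp]; [lra|]. exists 1. split; [lra|]. intros t Ht.
       apply (S_ypos0' _ _ _ _ _ _ _ HS); lra. }
  destruct HX0 as [HX [Hp0 [th [Hth Hpp]]]].
  destruct HX as [_ [_ HXnn]]. destruct (HXnn th Hth) as [Hph Hps].
  destruct (proj1 (su_sol _ _ _ _ _ _ _ HS) th Hth) as [Exth Eyth].
  assert (Hxth : 0 < x th).
  { rewrite Exth. destruct (Req_dec (phi th) 0) as [E|]; [rewrite E in Hpp; lra|lra]. }
  assert (Hyth : 0 < y th).
  { rewrite Eyth. destruct (Req_dec (psi th) 0) as [E|]; [rewrite E in Hpp; lra|lra]. }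
  destruct (S_ex _ _ _ _ _ _ _ HS th ltac:(lra) (x th / 2) ltac:(lra)) as [dx [Hdx Hdx2]].
  destruct (S_ey _ _ _ _ _ _ _ HS th ltac:(lra) (y th / 2) ltac:(lra)) as [dy [Hdy Hdy2]].
  set (d := Rmin dx dy / 2).
  assert (Hd : 0 < d /\ d < dx /\ d < dy).
  { unfold d. assert (H1 := Rmin_l dx dy). assert (H2 := Rmin_r dx dy).
    assert (0 < Rmin dx dy) by (apply Rmin_glb_lt; auto). lra. }
  assert (Hpos : forall r, th <= r <= th + d -> 0 < x r * y r).
  { intros r Hr. assert (H1 := Hdx2 r ltac:(lra) ltac:(apply Rabs_def1; lra)).
    assert (H2 := Hdy2 r ltac:(lra) ltac:(apply Rabs_def1; lra)).
    apply Rabs_def2 in H1. apply Rabs_def2 in H2. apply Rmult_lt_0_compat; lra. }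
  set (a := th + tau). set (b := th + d + tau).
  set (z := fun r => y r * exp (s * r)).
  destruct (MVT_gen z a b (fun r => exp (s * r) * (cc s Y tau * y (r - tau) * x (r - tau)))) as [xi [Hxi Hmvt]].
  - intros r Hr. rewrite Rmin_left in Hr by (unfold a, b; lra). rewrite Rmax_right in Hr by (unfold a, b; lra).
    apply (S_dz _ _ _ _ _ _ _ HS). unfold a in Hr; lra.
  - intros r Hr. rewrite Rmin_left in Hr by (unfold a, b; lra). rewrite Rmax_right in Hr by (unfold a, b; lra).
    apply cont_z. apply (S_cy _ _ _ _ _ _ _ HS). unfold a in Hr; lra.
  - rewrite Rmin_left in Hxi by (unfold a, b; lra). rewrite Rmax_right in Hxi by (unfold a, b; lra).
    assert (Hf : 0 < exp (s * xi) * (cc s Y tau * y (xi - tau) * x (xi - tau))).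
    { apply Rmult_lt_0_compat. apply exp_pos.
      assert (H := Hpos (xi - tau) ltac:(unfold a, b in Hxi; lra)). nra. }
    assert (Hza : 0 <= z a).
    { unfold z. apply Rmult_le_pos; [|apply Rlt_le, exp_pos].
      apply (S_ynn _ _ _ _ _ _ _ HS Hcase). unfold a; lra. }
    assert (Hzb : 0 < z b).
    { assert (0 < exp (s * xi) * (cc s Y tau * y (xi - tau) * x (xi - tau)) * (b - a)) by
        (apply Rmult_lt_0_compat; [auto|unfold a, b; lra]). lra. }
    exists b. split; [unfold b; lra|]. intros t Ht.
    assert (Hz := S_zmono _ _ _ _ _ _ _ HS Hcase b t ltac:(unfold b in *; lra)).
    fold (z b) in Hz. assert (Het := exp_pos (s * t)).
    destruct (Rlt_le_dec 0 (y t)); auto. nra.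
Qed.

Definition eta_c s Y tau := s / (2 * cc s Y tau).
Definition Pmax s Y tau := Kc s Y tau * Bconst s Y tau.
Definition etap s Y tau := eta_c s Y tau * exp (- (Pmax s Y tau / (s / 2))).
Definition dlt s Y tau := Rmin 1 ((cc s Y tau - s) / (8 * s * Kc s Y tau)).
Definition y0c s Y tau := Rmin (1/4) (Rmin ((1 - s / cc s Y tau) / 2) ((cc s Y tau - s) / (8 * s * Kc s Y tau))).
Definition mc s Y tau := Rmin (s / 2) (Rmin (s * (1 - s / cc s Y tau)) ((cc s Y tau - s) / (2 * Kc s Y tau))).
Definition ylow s Y tau := exp (ln (y0c s Y tau) + 2 * s * ln (etap s Y tau) - 2 * s * ln 2) / Kc s Y tau.
Definition epsc s Y tau := Rmin (etap s Y tau / 2) (ylow s Y tau / 2).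

Lemma consts_pos s Y tau : 0 < s -> 0 < Y -> 0 <= tau -> s < cc s Y tau ->
  1 <= Kc s Y tau /\ 0 < Bconst s Y tau /\ 0 < eta_c s Y tau < 1/2 /\
  0 < etap s Y tau <= eta_c s Y tau /\ 0 < dlt s Y tau <= 1 /\ 0 < y0c s Y tau /\ 0 < mc s Y tau /\
  0 < ylow s Y tau <= y0c s Y tau /\ 0 < epsc s Y tau.
Proof.
  intros Hs HY Ht Hc. set (c := cc s Y tau) in *.
  assert (HK : 1 <= Kc s Y tau).
  { unfold Kc. fold c. assert (0 <= 2 * c * tau * exp (s * tau)).
    { apply Rmult_le_pos; [|apply Rlt_le, exp_pos]. apply Rmult_le_pos; lra. } lra. }
  assert (HB : 0 < Bconst s Y tau).
  { unfold Bconst. fold c. assert (0 < (2 * s * c + c / 4) / s) by (apply Rdiv_lt_0_compat; nra). lra. }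
  assert (Heta : 0 < eta_c s Y tau < 1/2).
  { unfold eta_c. fold c. split. apply Rdiv_lt_0_compat; lra.
    apply Rmult_lt_reg_r with (2 * c); [lra|]. replace (s / (2 * c) * (2 * c)) with s by (field; lra). lra. }
  assert (Hetap : 0 < etap s Y tau <= eta_c s Y tau).
  { unfold etap. assert (Hp : 0 <= Pmax s Y tau / (s / 2)).
    { apply Rdiv_le_0_compat; [|lra]. unfold Pmax. apply Rmult_le_pos; lra. }
    assert (exp (- (Pmax s Y tau / (s / 2))) <= 1) by (rewrite <- exp_0; apply exp_le; lra).
    split. apply Rmult_lt_0_compat; [lra|apply exp_pos]. nra. }
  assert (Hq : 0 < (c - s) / (8 * s * Kc s Y tau)) by (apply Rdiv_lt_0_compat; [lra|]; nra).
  assert (Hys : 0 < 1 - s / c).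
  { assert (s / c < 1); [|lra]. apply Rmult_lt_reg_r with c; [lra|].
    replace (s / c * c) with s by (field; lra). lra. }
  assert (Hd : 0 < dlt s Y tau <= 1).
  { unfold dlt. fold c. apply Rmin_case_strong; lra. }
  assert (Hy0 : 0 < y0c s Y tau).
  { unfold y0c. fold c. apply Rmin_glb_lt; [lra|]. apply Rmin_glb_lt; lra. }
  assert (Hm : 0 < mc s Y tau).
  { unfold mc. fold c. apply Rmin_glb_lt; [lra|]. apply Rmin_glb_lt.
    apply Rmult_lt_0_compat; lra. apply Rdiv_lt_0_compat; lra. }
  assert (Hyl : 0 < ylow s Y tau <= y0c s Y tau).
  { unfold ylow. assert (He := exp_pos (ln (y0c s Y tau) + 2 * s * ln (etap s Y tau) - 2 * s * ln 2)).
    split. apply Rdiv_lt_0_compat; lra.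
    assert (ln (etap s Y tau) <= ln 2) by (apply ln_le; lra).
    assert (exp (ln (y0c s Y tau) + 2 * s * ln (etap s Y tau) - 2 * s * ln 2) <= y0c s Y tau).
    { rewrite <- (exp_ln (y0c s Y tau)) at 2 by lra. apply exp_le. nra. }
    assert (exp (ln (y0c s Y tau) + 2 * s * ln (etap s Y tau) - 2 * s * ln 2) / Kc s Y tau <=
            exp (ln (y0c s Y tau) + 2 * s * ln (etap s Y tau) - 2 * s * ln 2)).
    { apply Rmult_le_reg_r with (Kc s Y tau); [lra|]. unfold Rdiv. rewrite Rmult_assoc, Rinv_l by lra. nra. }
    lra. }
  repeat split; try lra.
  unfold epsc. apply Rmin_glb_lt; lra.
Qed.

Lemma part3b s Y tau phi psi x y : Setup s Y tau phi psi x y -> in_X0 tau phi psi ->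
  s < cc s Y tau -> liminf_gt x (epsc s Y tau) /\ liminf_gt y (epsc s Y tau).
Proof.
  intros HS HX0 Hsc.
  assert (Hs := su_s _ _ _ _ _ _ _ HS). assert (HY := su_Y _ _ _ _ _ _ _ HS).
  assert (Htau := su_tau _ _ _ _ _ _ _ HS).
  assert (Hcase := hcase_X0 _ _ _ Htau HX0).
  destruct (consts_pos s Y tau Hs HY Htau Hsc) as [HK [HB [Heta [Hetap [Hdl [Hy0 [Hm [Hyl Heps]]]]]]]].
  set (c := cc s Y tau) in *. set (K := Kc s Y tau) in *. set (B := Bconst s Y tau) in *.
  set (P := Pf s Y tau x y).
  destruct (S_ypos_ev _ _ _ _ _ _ _ HS HX0) as [Ty [HTy HTy']].
  destruct (S_xle _ _ _ _ _ _ _ HS Hcase (dlt s Y tau) ltac:(lra)) as [Tx [HTx HTx']].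
  destruct (S_ybound _ _ _ _ _ _ _ HS Hcase) as [TB [HTB HTB']]. fold B in HTB'.
  set (Ts := Rmax Ty (Rmax Tx TB) + tau + 1).
  assert (HTs : forall t, Ts <= t -> tau < t /\ 0 < t /\ 0 < x t /\ x t <= 1 + dlt s Y tau /\
              0 < y t /\ y t <= B /\ y t <= P t <= K * y t).
  { intros t Ht. assert (Ty <= Rmax Ty (Rmax Tx TB) /\ Tx <= Rmax Ty (Rmax Tx TB) /\ TB <= Rmax Ty (Rmax Tx TB)) as [Ha [Hb Hc]].
    { unfold Rmax. repeat destruct Rle_dec; lra. }
    unfold Ts in Ht.
    split; [lra|]. split; [lra|]. split; [apply (S_xpos _ _ _ _ _ _ _ HS); lra|].
    split; [apply HTx'; lra|]. split; [apply HTy'; lra|]. split; [apply HTB'; lra|].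
    apply (S_Pb _ _ _ _ _ _ _ HS Hcase). lra. intros r Hr. assert (H := HTx' r ltac:(lra)). lra. }
  assert (HTs0 : 0 < Ts) by (destruct (HTs Ts ltac:(lra)) as [_ [H _]]; lra).
  set (k := s / 2).
  set (eta := eta_c s Y tau) in *.
  assert (Hceta : c * eta = k) by (unfold eta, eta_c, k; fold c; field; lra).
  destruct (persist_gen x (fun t => ln (x t) - / k * P t)
      (fun t => (1 - x t - y t) - / k * (y t * (c * x t - s))) Ts eta (1/2) (ln 2)) as [t0x [Ht0x [Hxt0 Hexc]]].
  - lra.
  - intros t Ht. apply D_minus. apply (D_lnx _ _ _ _ _ _ _ HS); lra.
    apply D_scal. apply (S_dP _ _ _ _ _ _ _ HS). destruct (HTs t ltac:(lra)); lra.
  - intros t Ht. apply (S_cx _ _ _ _ _ _ _ HS). lra.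
  - intros t Ht Hle. destruct (HTs t ltac:(lra)) as [_ [_ [Hx1 [_ [Hy1 _]]]]].
    assert (c * x t <= k) by (rewrite <- Hceta; apply Rmult_le_compat_l; lra).
    assert (y t * (c * x t - s) <= - k * y t) by (unfold k in *; nra).
    assert (/ k * (y t * (c * x t - s)) <= / k * (- k * y t)) by (apply Rmult_le_compat_l; [apply Rlt_le, Rinv_0_lt_compat; unfold k; lra|auto]).
    replace (/ k * (- k * y t)) with (- y t) in H1 by (field; unfold k; lra). lra.
  - intros t Ht. destruct (HTs t ltac:(lra)) as [_ [_ [Hx1 [Hx2 [Hy1 [_ [HP1 _]]]]]]].
    assert (ln (x t) <= ln 2) by (apply ln_le; lra).
    assert (0 <= / k * P t) by (apply Rmult_le_pos; [apply Rlt_le, Rinv_0_lt_compat; unfold k; lra|lra]). lra.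
  - assert (Hxlow : forall t, t0x <= t -> etap s Y tau <= x t).
    { intros t Ht. destruct (Rlt_le_dec (x t) eta) as [Hlt|Hge]; [|lra].
      destruct (Hexc t Ht Hlt) as [S [HS1 [HS2 HS3]]].
      destruct (HTs S ltac:(lra)) as [_ [_ [HxS1 [_ [HyS1 [HyS2 [_ HPS]]]]]]].
      destruct (HTs t ltac:(lra)) as [_ [_ [Hxt1 [_ [Hyt1 [_ [HPt _]]]]]]].
      rewrite HS2 in HS3.
      assert (HPS' : P S <= Pmax s Y tau) by (unfold Pmax; fold K B; nra).
      assert (/ k * P S <= Pmax s Y tau / k) by (unfold Rdiv; rewrite Rmult_comm; apply Rmult_le_compat_r; [apply Rlt_le, Rinv_0_lt_compat; unfold k; lra|auto]).
      assert (0 <= / k * P t) by (apply Rmult_le_pos; [apply Rlt_le, Rinv_0_lt_compat; unfold k; lra|lra]).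
      assert (Hl : ln eta - Pmax s Y tau / k <= ln (x t)) by lra.
      unfold etap. fold eta. fold k.
      rewrite <- (exp_ln eta) by lra. rewrite <- exp_plus.
      rewrite <- (exp_ln (x t)) by lra. apply exp_le. lra. }
    set (y0 := y0c s Y tau) in *. set (m := mc s Y tau) in *.
    destruct (persist_gen y (fun t => ln (P t) + 2 * s * ln (x t))
      (fun t => y t * (c * x t - s) / P t + 2 * s * (1 - x t - y t)) t0x y0 m (ln (Pmax s Y tau) + 2 * s * ln 2))
      as [t0y [Ht0y [Hyt0 Hexy]]].
    + lra.
    + intros t Ht. destruct (HTs t ltac:(lra)) as [Ht1 [Ht2 [_ [_ [Hy1 [_ [HP1 _]]]]]]].
      apply D_plus. apply D_ln. lra. apply (S_dP _ _ _ _ _ _ _ HS); lra.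
      apply D_scal. apply (D_lnx _ _ _ _ _ _ _ HS); lra.
    + intros t Ht. apply (S_cy _ _ _ _ _ _ _ HS). lra.
    + intros t Ht Hle. destruct (HTs t ltac:(lra)) as [_ [_ [Hx1 [Hx2 [Hy1 [_ [HP1 HP2]]]]]]].
      assert (HiK : 0 < / K <= 1).
      { split. apply Rinv_0_lt_compat; lra. rewrite <- Rinv_1. apply Rinv_le_contravar; lra. }
      set (w := y t / P t).
      assert (Hw : / K <= w <= 1).
      { unfold w. split.
        - apply Rmult_le_reg_r with (K * P t). nra.
          replace (/ K * (K * P t)) with (P t) by (field; lra).
          replace (y t / P t * (K * P t)) with (K * y t) by (field; lra). lra.
        - apply Rmult_le_reg_r with (P t). lra. replace (y t / P t * P t) with (y t) by (field; lra). lra. }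
      replace (y t * (c * x t - s) / P t) with (w * (c * x t - s)) by (unfold w; field; lra).
      assert (H8 : forall v, v <= (c - s) / (8 * s * K) -> 8 * s * v <= (c - s) * / K).
      { intros v Hv. apply Rmult_le_compat_l with (r := 8 * s) in Hv; [|lra].
        replace (8 * s * ((c - s) / (8 * s * K))) with ((c - s) * / K) in Hv by (field; lra). auto. }
      apply (Hineq c s (/ K) (dlt s Y tau) y0 m (x t) (y t) w); try lra.
      * apply H8. unfold dlt. fold c K. apply Rmin_r.
      * apply H8. unfold y0, y0c. fold c K. eapply Rle_trans; apply Rmin_r.
      * unfold y0, y0c. fold c. apply Rmin_l.
      * unfold y0, y0c. fold c. eapply Rle_trans; [apply Rmin_r|apply Rmin_l].
      * unfold m, mc. fold c. apply Rmin_l.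
      * unfold m, mc. fold c. eapply Rle_trans; [apply Rmin_r|apply Rmin_l].
      * unfold m, mc. fold c K. eapply Rle_trans; [apply Rmin_r|]. eapply Rle_trans; [apply Rmin_r|].
        right. field. lra.
    + intros t Ht. destruct (HTs t ltac:(lra)) as [_ [_ [Hx1 [Hx2 [Hy1 [Hy2 [HP1 HP2]]]]]]].
      assert (ln (P t) <= ln (Pmax s Y tau)) by (apply ln_le; [lra|]; unfold Pmax; fold K B; nra).
      assert (ln (x t) <= ln 2) by (apply ln_le; lra).
      assert (2 * s * ln (x t) <= 2 * s * ln 2) by (apply Rmult_le_compat_l; lra). lra.
    + split.
      * exists (etap s Y tau). split. unfold epsc. assert (H := Rmin_l (etap s Y tau / 2) (ylow s Y tau / 2)). lra.
        exists t0x. auto.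
      * exists (ylow s Y tau). split. unfold epsc. assert (H := Rmin_r (etap s Y tau / 2) (ylow s Y tau / 2)). lra.
        exists t0y. intros t Ht.
        destruct (Rlt_le_dec (y t) y0) as [Hlt|Hge]; [|lra].
        destruct (Hexy t Ht Hlt) as [S [HS1 [HS2 HS3]]].
        destruct (HTs S ltac:(lra)) as [_ [_ [HxS1 [_ [HyS1 [HyS2 [HPS _]]]]]]].
        destruct (HTs t ltac:(lra)) as [_ [_ [Hxt1 [Hxt2 [Hyt1 [_ [HPt1 HPt2]]]]]]].
        assert (ln y0 <= ln (P S)) by (apply ln_le; lra).
        assert (ln (etap s Y tau) <= ln (x S)) by (apply ln_le; [lra|apply Hxlow; lra]).
        assert (ln (x t) <= ln 2) by (apply ln_le; lra).
        assert (2 * s * ln (etap s Y tau) <= 2 * s * ln (x S)) by (apply Rmult_le_compat_l; lra).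
        assert (2 * s * ln (x t) <= 2 * s * ln 2) by (apply Rmult_le_compat_l; lra).
        assert (HlnP : ln y0 + 2 * s * ln (etap s Y tau) - 2 * s * ln 2 <= ln (P t)) by lra.
        apply exp_le in HlnP. rewrite exp_ln in HlnP by lra.
        unfold ylow. fold y0 K.
        apply Rmult_le_reg_r with K; [lra|]. unfold Rdiv. rewrite Rmult_assoc, Rinv_l by lra. lra.
Qed.


Theorem theorem3p1 (s Y tau : R) (hs : 0 < s) (hY : 0 < Y) (htau : 0 <= tau) :
  (* 1. E0 always unstable *)
  unstable s Y tau 0 0 /\
  (* 2(a). E1 unstable if tau < tau_c *)
  (tau < tau_c s Y -> unstable s Y tau 1 0) /\
  (* 2(b). E1 GAS w.r.t. X^0 if tau > tau_c *)
  (tau_c s Y < tau ->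
     loc_asym_stable s Y tau 1 0 /\
     forall phi psi x y : R -> R,
       in_X0 tau phi psi -> is_solution s Y tau phi psi x y ->
       is_lim x p_infty (Finite 1) /\ is_lim y p_infty (Finite 0)) /\
  (* 3. positivity of E+ *)
  ((0 < x_plus s Y tau /\ 0 < y_plus s Y tau) <-> tau < tau_c s Y) /\
  (* 3(a). tau = 0: E+ GAS w.r.t. int R^2_+ *)
  (tau = 0 -> 0 < x_plus s Y tau -> 0 < y_plus s Y tau ->
     loc_asym_stable s Y tau (x_plus s Y tau) (y_plus s Y tau) /\
     forall phi psi x y : R -> R,
       in_X tau phi psi -> 0 < phi 0 -> 0 < psi 0 ->
       is_solution s Y tau phi psi x y ->
       is_lim x p_infty (Finite (x_plus s Y tau)) /\
       is_lim y p_infty (Finite (y_plus s Y tau))) /\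
  (* 3(b). uniform persistence w.r.t. X^0 *)
  (0 < x_plus s Y tau -> 0 < y_plus s Y tau ->
     exists eps, 0 < eps /\
       forall phi psi x y : R -> R,
         in_X0 tau phi psi -> is_solution s Y tau phi psi x y ->
         liminf_gt x eps /\ liminf_gt y eps).
Proof.
  split; [apply E0_unstable|].
  split.
  { intros H. apply E1_unstable; auto. apply tau_lt_iff; auto. }
  split.
  { intros H. assert (Hc := proj1 (tau_gt_iff s Y tau hs hY) H). split.
    - apply E1_stable; auto.
    - intros phi psi x y HX0 Hsol.
      assert (HS : Setup s Y tau phi psi x y) by (constructor; auto; [apply HX0|apply HX0]).
      apply (part2b _ _ _ _ _ _ _ HS HX0 Hc). }
  split; [apply Eplus_pos_iff; auto|].
  split.
  { intros Ht Hxp Hyp. subst tau. split.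
    - apply Eplus_stable0; auto.
    - intros phi psi x y HX Hp0 Hps0 Hsol.
      assert (HS : Setup s Y 0 phi psi x y) by (constructor; auto; lra).
      assert (Exp : x_plus s Y 0 = s / Y) by (unfold x_plus; rewrite Rmult_0_r, exp_0; ring).
      assert (Eyp : y_plus s Y 0 = 1 - s / Y) by (unfold y_plus; rewrite Rmult_0_r, exp_0; ring).
      rewrite Exp, Eyp. rewrite Eyp in Hyp.
      apply (part3a _ _ _ _ _ _ HS Hps0 Hyp). }
  { intros Hxp Hyp.
    assert (Hlt := proj1 (Eplus_pos_iff s Y tau hs hY) (conj Hxp Hyp)).
    assert (Hc := proj1 (tau_lt_iff s Y tau hs hY) Hlt).
    exists (epsc s Y tau). split.
    - apply (consts_pos s Y tau hs hY htau Hc).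
    - intros phi psi x y HX0 Hsol.
      assert (HS : Setup s Y tau phi psi x y) by (constructor; auto; [apply HX0|apply HX0]).
      apply (part3b _ _ _ _ _ _ _ HS HX0 Hc). }
Qed.
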